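(* With $n_1,n_2,c,\varepsilon,\omega,\Omega$ as below and $\mathcal{O}\subset\mathbb{R}^2_+$ bounded, for $\gamma>0$, $\tau>0$ let $\mathcal{O}_0(\gamma)$ be the set of $\xi\in\mathcal{O}$ such that for all $k\in\mathbb{Z}^2\setminus\{0\}$ and all $i,j\in\mathbb{Z}_1$: $|\langle k,\omega(\xi)\rangle|\ge\gamma|k|^{-\tau}$; $|\langle k,\omega(\xi)\rangle\pm\Omega_j(\xi)|\ge\gamma|j|^{2}|k|^{-\tau}$; $|\langle k,\omega(\xi)\rangle\pm(\Omega_i(\xi)+\Omega_j(\xi))|\ge\gamma(|i|+|j|)^2|k|^{-\tau}$; $|\langle k,\omega(\xi)\rangle+\Omega_i(\xi)-\Omega_j(\xi)|\ge\gamma(|i|-|j|)(|i|+|j|)|k|^{-\tau}$ whenever $|i|\ne|j|$; $|\langle k,\omega(\xi)\rangle+\Omega_j(\xi)-\Omega_{-j}(\xi)|\ge\gamma|j||k|^{-\tau}$ (whenever $j,-j\in\mathbb{Z}_1$). Then for $\tau$ sufficiently large there exist $\gamma_0>0$ and $C>0$ (independent of $\gamma$) such that $\mathrm{meas}(\mathcal{O}\setminus\mathcal{O}_0(\gamma))\le C\gamma$ for all $0<\gamma\le\gamma_0$.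
   Context: $n_1,n_2$ are integers with $n_2>n_1>0$, $n_1$ odd, $n_2-n_1=4$; $c>0$, $\varepsilon>0$ with $\varepsilon^{-4}>\frac{c}{2\pi}$; $\mathbb{Z}_1=\mathbb{Z}\setminus\{0,n_1,n_2\}$; $|k|=|k_1|+|k_2|$. $\omega_1(\xi)=\varepsilon^{-4}n_1^2+\frac{1}{4\pi}(n_1+n_2)c+\frac1{4\pi}(n_1-n_2)\xi_1$, $\omega_2(\xi)=\varepsilon^{-4}n_2^2+\frac{1}{4\pi}(n_1+n_2)c+\frac1{4\pi}(n_2-n_1)\xi_2$, $\Omega_j(\xi)=\varepsilon^{-4}j^2+\frac{1}{4\pi}(cj+n_1\xi_1+n_2\xi_2)$ for $j\in\mathbb{Z}_1$. ''meas'' is Lebesgue measure on $\mathbb{R}^2$. *)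

(* Defs.v *)
From Stdlib Require Import Reals Lra ZArith.
Open Scope R_scope.

Definition pt := (R * R)%type.

Definition omega1 (n1 n2 : Z) (c eps : R) (xi : pt) : R :=
  / (eps ^ 4) * (IZR n1) ^ 2 + / (4 * PI) * IZR (n1 + n2) * c
  + / (4 * PI) * IZR (n1 - n2) * fst xi.

Definition omega2 (n1 n2 : Z) (c eps : R) (xi : pt) : R :=
  / (eps ^ 4) * (IZR n2) ^ 2 + / (4 * PI) * IZR (n1 + n2) * c
  + / (4 * PI) * IZR (n2 - n1) * snd xi.

Definition Omega (n1 n2 : Z) (c eps : R) (j : Z) (xi : pt) : R :=
  / (eps ^ 4) * (IZR j) ^ 2
  + / (4 * PI) * (c * IZR j + IZR n1 * fst xi + IZR n2 * snd xi).

Definition inZ1 (n1 n2 j : Z) : Prop := j <> 0%Z /\ j <> n1 /\ j <> n2.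

Definition kdot (n1 n2 : Z) (c eps : R) (k1 k2 : Z) (xi : pt) : R :=
  IZR k1 * omega1 n1 n2 c eps xi + IZR k2 * omega2 n1 n2 c eps xi.

Definition knorm (k1 k2 : Z) : R := IZR (Z.abs k1 + Z.abs k2).

Definition zabs (j : Z) : R := IZR (Z.abs j).

Definition O0 (n1 n2 : Z) (c eps : R) (O : pt -> Prop) (gamma tau : R)
  (xi : pt) : Prop :=
  O xi /\
  forall k1 k2 : Z, (k1 <> 0%Z \/ k2 <> 0%Z) ->
    let w := kdot n1 n2 c eps k1 k2 xi in
    let kt := Rpower (knorm k1 k2) (- tau) in
    let Om := fun j => Omega n1 n2 c eps j xi in
    Rabs w >= gamma * kt /\
    (forall j, inZ1 n1 n2 j ->
       Rabs (w + Om j) >= gamma * (zabs j) ^ 2 * kt /\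
       Rabs (w - Om j) >= gamma * (zabs j) ^ 2 * kt) /\
    (forall i j, inZ1 n1 n2 i -> inZ1 n1 n2 j ->
       Rabs (w + (Om i + Om j)) >= gamma * (zabs i + zabs j) ^ 2 * kt /\
       Rabs (w - (Om i + Om j)) >= gamma * (zabs i + zabs j) ^ 2 * kt) /\
    (forall i j, inZ1 n1 n2 i -> inZ1 n1 n2 j -> zabs i <> zabs j ->
       Rabs (w + Om i - Om j)
         >= gamma * (zabs i - zabs j) * (zabs i + zabs j) * kt) /\
    (forall j, inZ1 n1 n2 j -> inZ1 n1 n2 (- j)%Z ->
       Rabs (w + Om j - Om (- j)%Z) >= gamma * zabs j * kt).

(* Lebesgue outer measure on R^2 (defined via countable covers by closed
   rectangles [a_n,b_n] x [c_n,d_n]):  meas_le A x  <->  meas*(A) <= x,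
   i.e. for every eps > 0 there is a countable rectangle cover of A of total
   area at most x + eps. *)
Definition meas_le (A : pt -> Prop) (x : R) : Prop :=
  forall e : R, e > 0 ->
  exists a b c d : nat -> R,
    (forall n, a n <= b n /\ c n <= d n) /\
    (forall p, A p -> exists n,
        a n <= fst p <= b n /\ c n <= snd p <= d n) /\
    (forall N, sum_f_R0 (fun n => (b n - a n) * (d n - c n)) N <= x + e).

(* Main.v *)
Require Import Defs.
From Stdlib Require Import Reals ZArith.
From Stdlib Require Import Lra Lia Psatz Cantor ClassicalEpsilon Classical.
Open Scope R_scope.

Lemma meas_le_mono (A B : pt -> Prop) x y :
  (forall p, A p -> B p) -> x <= y -> meas_le B x -> meas_le A y.
Proof.
  intros HAB Hxy HB e He. destruct (HB e He) as (a&b&c&d&H1&H2&H3).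
  exists a,b,c,d. split; [exact H1|split].
  - intros p Hp. apply H2, HAB, Hp.
  - intros N. specialize (H3 N). lra.
Qed.

Lemma meas_le_empty (A : pt -> Prop) x :
  (forall p, ~ A p) -> 0 <= x -> meas_le A x.
Proof.
  intros HA Hx e He. exists (fun _ => 0), (fun _ => 0), (fun _ => 0), (fun _ => 0).
  split; [intros; lra|split].
  - intros p Hp. exfalso. exact (HA p Hp).
  - intros N. induction N; simpl; lra.
Qed.

Lemma meas_le_swap (A : pt -> Prop) x :
  meas_le A x -> meas_le (fun p => A (snd p, fst p)) x.
Proof.
  intros HA e He. destruct (HA e He) as (a&b&c&d&H1&H2&H3).
  exists c,d,a,b. split; [intros n; specialize (H1 n); tauto|split].
  - intros p Hp. destruct (H2 _ Hp) as [n Hn]. exists n. simpl in Hn. tauto.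
  - intros N. specialize (H3 N).
    replace (sum_f_R0 (fun n => (d n - c n) * (b n - a n)) N)
      with (sum_f_R0 (fun n => (b n - a n) * (d n - c n)) N); [lra|].
    apply sum_eq. intros; ring.
Qed.

Lemma sum_point (f g : nat -> R) n0 K :
  (n0 <= K)%nat -> (forall n, n <> n0 -> f n = g n) ->
  sum_f_R0 f K = sum_f_R0 g K + (f n0 - g n0).
Proof.
  intros Hle Hfg. induction K.
  - assert (n0 = 0%nat) by lia. subst. simpl. ring.
  - destruct (Nat.eq_dec n0 (S K)) as [->|Hne].
    + simpl. assert (sum_f_R0 f K = sum_f_R0 g K).
      { apply sum_eq. intros i Hi. apply Hfg. lia. }
      lra.
    + simpl. rewrite IHK by lia. rewrite (Hfg (S K)) by lia. ring.
Qed.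

Lemma sum_nonneg (f : nat -> R) K : (forall n, 0 <= f n) -> 0 <= sum_f_R0 f K.
Proof. intros H. induction K; simpl; [apply H|]. specialize (H (S K)). lra. Qed.

Lemma sum_le' (f g : nat -> R) K : (forall n, (n <= K)%nat -> f n <= g n) ->
  sum_f_R0 f K <= sum_f_R0 g K.
Proof.
  intros H. induction K; simpl; [apply H; lia|].
  assert (f (S K) <= g (S K)) by (apply H; lia).
  assert (sum_f_R0 f K <= sum_f_R0 g K) by (apply IHK; intros; apply H; lia). lra.
Qed.

Definition box (a : nat -> nat -> R) K :=
  sum_f_R0 (fun n => sum_f_R0 (fun i => a n i) K) K.


Definition zap (a : nat -> nat -> R) (p : nat * nat) : nat -> nat -> R :=
  fun n i => if Nat.eq_dec n (fst p) then (if Nat.eq_dec i (snd p) then 0 else a n i) else a n i.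

Lemma box_point a K p : (fst p <= K /\ snd p <= K)%nat ->
  box a K = box (zap a p) K + a (fst p) (snd p).
Proof.
  intros [H1 H2]. unfold box.
  rewrite (sum_point _ (fun n => sum_f_R0 (fun i => zap a p n i) K) (fst p) K H1).
  - rewrite (sum_point (fun i => a (fst p) i) (fun i => zap a p (fst p) i) (snd p) K H2).
    + unfold zap. destruct (Nat.eq_dec _ _); [|congruence]. destruct (Nat.eq_dec _ _); [|congruence]. ring.
    + intros n Hn. unfold zap. destruct (Nat.eq_dec _ _); [|congruence]. destruct (Nat.eq_dec _ _); congruence.
  - intros n Hn. apply sum_eq. intros i _. unfold zap. destruct (Nat.eq_dec _ _); congruence.
Qed.

Lemma box_nonneg a K : (forall n i, 0 <= a n i) -> 0 <= box a K.
Proof. intros H. unfold box. apply sum_nonneg. intros; apply sum_nonneg. intros; apply H. Qed.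

Lemma zap_nonneg a p : (forall n i, 0 <= a n i) -> forall n i, 0 <= zap a p n i.
Proof. intros H n i. unfold zap. destruct (Nat.eq_dec _ _); [destruct (Nat.eq_dec _ _)|]; try lra; apply H. Qed.

Lemma box_inj (g : nat -> nat * nat) K :
  (forall x y, g x = g y -> x = y) ->
  forall N0, (forall N, (N <= N0)%nat -> (fst (g N) <= K /\ snd (g N) <= K)%nat) ->
  forall a : nat -> nat -> R, (forall n i, 0 <= a n i) ->
  sum_f_R0 (fun N => a (fst (g N)) (snd (g N))) N0 <= box a K.
Proof.
  intros Hinj N0. induction N0 as [|N0 IH]; intros Hbox a Ha.
  - simpl. rewrite (box_point a K (g 0%nat)) by (apply Hbox; lia).
    pose proof (box_nonneg _ K (zap_nonneg a (g 0%nat) Ha)). lra.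
  - simpl. rewrite (box_point a K (g (S N0))) by (apply Hbox; lia).
    assert (sum_f_R0 (fun N => a (fst (g N)) (snd (g N))) N0 =
            sum_f_R0 (fun N => zap a (g (S N0)) (fst (g N)) (snd (g N))) N0) as ->.
    { apply sum_eq. intros N HN. unfold zap.
      destruct (Nat.eq_dec _ _) as [E1|]; [|reflexivity].
      destruct (Nat.eq_dec _ _) as [E2|]; [|reflexivity].
      exfalso. assert (g N = g (S N0)) by (destruct (g N), (g (S N0)); simpl in *; congruence).
      apply Hinj in H. lia. }
    assert (sum_f_R0 (fun N => zap a (g (S N0)) (fst (g N)) (snd (g N))) N0
            <= box (zap a (g (S N0))) K).
    { apply IH. intros; apply Hbox; lia. apply zap_nonneg, Ha. }
    lra.
Qed.

Lemma geom_sum K : sum_f_R0 (fun n => / 2 ^ (S n)) K = 1 - / 2 ^ (S K).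
Proof.
  induction K.
  - simpl. field.
  - rewrite tech5, IHK. simpl. field. apply pow_nonzero. lra.
Qed.

Definition quad := ((nat -> R) * (nat -> R) * (nat -> R) * (nat -> R))%type.
Definition qa (q : quad) := fst (fst (fst q)).
Definition qb (q : quad) := snd (fst (fst q)).
Definition qc (q : quad) := snd (fst q).
Definition qd (q : quad) := snd q.

Definition coverP (A : pt -> Prop) (y : R) (q : quad) : Prop :=
  (forall n, qa q n <= qb q n /\ qc q n <= qd q n) /\
  (forall p, A p -> exists n, qa q n <= fst p <= qb q n /\ qc q n <= snd p <= qd q n) /\
  (forall N, sum_f_R0 (fun n => (qb q n - qa q n) * (qd q n - qc q n)) N <= y).

Lemma meas_le_union (A : pt -> Prop) (B : nat -> pt -> Prop) (x : nat -> R) X :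
  (forall p, A p -> exists n, B n p) -> (forall n, meas_le (B n) (x n)) ->
  (forall N, sum_f_R0 x N <= X) -> meas_le A X.
Proof.
  intros HA HB HX e He.
  assert (Hex : forall n, exists q, coverP (B n) (x n + e / 2 ^ (S n)) q).
  { intros n. assert (e / 2 ^ (S n) > 0).
    { apply Rdiv_lt_0_compat; [lra|apply pow_lt; lra]. }
    destruct (HB n _ H) as (a&b&c&d&H1&H2&H3). exists (a,b,c,d). split; [|split]; assumption. }
  set (Q := fun n => proj1_sig (constructive_indefinite_description _ (Hex n))).
  assert (HQ : forall n, coverP (B n) (x n + e / 2 ^ (S n)) (Q n)).
  { intros n. unfold Q. apply proj2_sig. }
  clearbody Q.
  set (ar := fun n i => (qb (Q n) i - qa (Q n) i) * (qd (Q n) i - qc (Q n) i)).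
  exists (fun N => qa (Q (fst (of_nat N))) (snd (of_nat N))),
         (fun N => qb (Q (fst (of_nat N))) (snd (of_nat N))),
         (fun N => qc (Q (fst (of_nat N))) (snd (of_nat N))),
         (fun N => qd (Q (fst (of_nat N))) (snd (of_nat N))).
  split; [|split].
  - intros N. apply (HQ _).
  - intros p Hp. destruct (HA p Hp) as [n Hn].
    destruct (HQ n) as [_ [H2 _]]. destruct (H2 p Hn) as [i Hi].
    exists (to_nat (n, i)). rewrite cancel_of_to. simpl. exact Hi.
  - intros N0.
    assert (Har : forall n i, 0 <= ar n i).
    { intros n i. unfold ar. destruct (HQ n) as [H1 _]. destruct (H1 i). nra. }
    eapply Rle_trans.
    + apply (box_inj of_nat N0) with (a := ar).
      * intros u v Huv. rewrite <- (cancel_to_of u), <- (cancel_to_of v), Huv. reflexivity.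
      * intros N HN. pose proof (to_nat_non_decreasing (fst (of_nat N)) (snd (of_nat N))).
        rewrite <- surjective_pairing, cancel_to_of in H. lia.
      * exact Har.
    + unfold box. eapply Rle_trans.
      * apply (sum_le' _ (fun n => x n + e / 2 ^ (S n))). intros n _.
        destruct (HQ n) as [_ [_ H3]]. apply H3.
      * rewrite sum_plus. specialize (HX N0).
        assert (sum_f_R0 (fun n => e / 2 ^ (S n)) N0 <= e).
        { replace (sum_f_R0 (fun n => e / 2 ^ (S n)) N0) with (e * sum_f_R0 (fun n => / 2 ^ (S n)) N0).
          - rewrite geom_sum. assert (0 < / 2 ^ (S N0)) by (apply Rinv_0_lt_compat, pow_lt; lra). nra.
          - rewrite scal_sum. apply sum_eq. intros; unfold Rdiv; ring. }
        lra.
Qed.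

Lemma meas_le_finite (A : pt -> Prop) (B : nat -> pt -> Prop) (x : R) K :
  (forall p, A p -> exists n, (n <= K)%nat /\ B n p) ->
  (forall n, (n <= K)%nat -> meas_le (B n) x) -> 0 <= x ->
  meas_le A (INR (S K) * x).
Proof.
  intros HA HB Hx.
  apply (meas_le_union A (fun n p => (n <= K)%nat /\ B n p) (fun n => if le_lt_dec n K then x else 0)).
  - exact HA.
  - intros n. destruct (le_lt_dec n K).
    + apply (meas_le_mono _ (B n) x x); [tauto|lra|auto].
    + apply meas_le_empty; [intros p [? ?]; lia|lra].
  - intros N.
    assert (Heq : sum_f_R0 (fun n => if le_lt_dec n K then x else 0) N = INR (S (Nat.min N K)) * x).
    { induction N.
      - cbn [sum_f_R0]. destruct (le_lt_dec 0 K); [|lia]. replace (Nat.min 0 K) with 0%nat by lia. simpl; ring.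
      - cbn [sum_f_R0]. rewrite IHN. destruct (le_lt_dec (S N) K).
        + replace (Nat.min (S N) K) with (S N) by lia. replace (Nat.min N K) with N by lia.
          rewrite (S_INR (S N)). ring.
        + replace (Nat.min (S N) K) with (Nat.min N K) by lia. ring. }
    rewrite Heq. apply Rmult_le_compat_r; [lra|]. apply le_INR. lia.
Qed.

Lemma Rabs_le_inv (a b : R) : Rabs a <= b -> - b <= a <= b.
Proof. intros H. unfold Rabs in H. destruct (Rcase_abs a); lra. Qed.

Lemma sum_ind (x : R) K N : 0 <= x ->
  sum_f_R0 (fun n => if le_lt_dec n K then x else 0) N <= INR (S K) * x.
Proof.
  intros Hx.
    assert (Heq : sum_f_R0 (fun n => if le_lt_dec n K then x else 0) N = INR (S (Nat.min N K)) * x).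
    { induction N.
      - cbn [sum_f_R0]. destruct (le_lt_dec 0 K); [|lia]. replace (Nat.min 0 K) with 0%nat by lia. simpl; ring.
      - cbn [sum_f_R0]. rewrite IHN. destruct (le_lt_dec (S N) K).
        + replace (Nat.min (S N) K) with (S N) by lia. replace (Nat.min N K) with N by lia.
          rewrite (S_INR (S N)). ring.
        + replace (Nat.min (S N) K) with (Nat.min N K) by lia. ring. }
    rewrite Heq. apply Rmult_le_compat_r; [lra|]. apply le_INR. lia.
Qed.

Lemma nat_above (r : R) : exists n : nat, r <= INR n.
Proof.
  destruct (archimed r) as [H1 _]. exists (Z.to_nat (up r)).
  destruct (Z.le_gt_cases 0 (up r)).
  - rewrite INR_IZR_INZ, Z2Nat.id by lia. lra.
  - assert (IZR (up r) < 0) by (apply IZR_lt; lia). pose proof (pos_INR (Z.to_nat (up r))). lra.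
Qed.

Lemma find_piece (h t : R) L : 0 < h -> 0 <= t <= INR (S L) * h ->
  exists i, (i <= L)%nat /\ INR i * h <= t <= INR (S i) * h.
Proof.
  intros Hh. induction L; intros Ht.
  - exists 0%nat. split; [lia|]. simpl in *. lra.
  - destruct (Rle_dec t (INR (S L) * h)).
    + destruct IHL as [i [Hi1 Hi2]]; [lra|]. exists i. split; [lia|lra].
    + exists (S L). split; [lia|]. lra.
Qed.

Lemma strip (M alpha p q delta : R) (f : pt -> R) :
  0 < M -> 0 < delta -> p <> 0 -> (forall xi, f xi = alpha + p * fst xi + q * snd xi) ->
  meas_le (fun xi => Rabs (fst xi) <= M /\ Rabs (snd xi) <= M /\ Rabs (f xi) < delta)
          (4 * M * delta / Rabs p).
Proof.
  intros HM Hd Hp Hf e He.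
  assert (Hap : 0 < Rabs p) by (apply Rabs_pos_lt; auto).
  destruct (nat_above (8 * M * M * Rabs q / (Rabs p * e))) as [L HL].
  set (h := 2 * M / INR (S L)).
  assert (HSL : 0 < INR (S L)) by (apply lt_0_INR; lia).
  assert (Hh : 0 < h) by (unfold h; apply Rdiv_lt_0_compat; lra).
  set (r := (delta + Rabs q * h) / Rabs p).
  assert (Hr : 0 < r) by (unfold r; apply Rdiv_lt_0_compat; [pose proof (Rabs_pos q); nra|lra]).
  set (vi := fun i => - M + INR i * h).
  set (ci := fun i => - (alpha + q * vi i) / p).
  exists (fun i => if le_lt_dec i L then ci i - r else 0),
         (fun i => if le_lt_dec i L then ci i + r else 0),
         (fun i => if le_lt_dec i L then vi i else 0),
         (fun i => if le_lt_dec i L then vi i + h else 0).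
  split; [|split].
  - intros n. destruct (le_lt_dec n L); lra.
  - intros [u v] (Hu & Hv & Hfx). cbn [fst snd] in *.
    destruct (find_piece h (v + M) L Hh) as [i [Hi1 Hi2]].
    { split. apply Rabs_le_inv in Hv; lra. replace (INR (S L) * h) with (2*M) by (unfold h; field; lra).
      apply Rabs_le_inv in Hv; lra. }
    exists i. destruct (le_lt_dec i L); [|lia].
    assert (Hvv : Rabs (v - vi i) <= h).
    { unfold vi. rewrite S_INR in Hi2. apply Rabs_le; lra. }
    assert (Hc : u - ci i = (f (u, v) - q * (v - vi i)) / p).
    { rewrite Hf. unfold ci. simpl. field. auto. }
    assert (Rabs (u - ci i) <= r).
    { rewrite Hc. unfold Rdiv. rewrite Rabs_mult, Rabs_inv. unfold r. unfold Rdiv.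
      apply Rmult_le_compat_r; [left; apply Rinv_0_lt_compat; auto|].
      eapply Rle_trans; [apply Rabs_triang|]. rewrite Rabs_Ropp, Rabs_mult.
      pose proof (Rabs_pos q). nra. }
    apply Rabs_le_inv in H. unfold vi in *. rewrite S_INR in Hi2. split; lra.
  - intros N.
    eapply Rle_trans.
    + apply (sum_le' _ (fun n => if le_lt_dec n L then (2 * r) * h else 0)).
      intros n _. destruct (le_lt_dec n L); [|lra]. right. ring.
    + eapply Rle_trans; [apply sum_ind; nra|].
      assert (INR (S L) * h = 2 * M) by (unfold h; field; lra).
      assert (Hq : 4 * M * Rabs q * h / Rabs p <= e).
      { unfold h. apply Rmult_le_reg_r with (Rabs p); [auto|].
        unfold Rdiv. rewrite Rmult_assoc, Rinv_l by lra.
        apply Rmult_le_reg_r with (INR (S L)); [auto|].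
        replace (4 * M * Rabs q * (2 * M * / INR (S L)) * 1 * INR (S L))
          with (8 * M * M * Rabs q) by (field; lra).
        rewrite S_INR.
        apply (Rmult_le_compat_r (Rabs p * e)) in HL; [|nra].
        unfold Rdiv in HL. rewrite Rmult_assoc, Rinv_l in HL by nra. nra. }
      replace (INR (S L) * (2 * r * h)) with (2 * r * (INR (S L) * h)) by ring.
      rewrite H. unfold r. unfold Rdiv in *.
      replace (2 * ((delta + Rabs q * h) * / Rabs p) * (2 * M))
        with (4 * M * delta * / Rabs p + 4 * M * Rabs q * h * / Rabs p) by ring.
      lra.
Qed.

Definition boxM (M : R) (xi : pt) := Rabs (fst xi) <= M /\ Rabs (snd xi) <= M.

Lemma strip_gen (A : pt -> Prop) (M alpha p q delta rho : R) (f : pt -> R) :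
  0 < M -> 0 < delta -> 0 < rho -> (rho <= Rabs p \/ rho <= Rabs q) ->
  (forall xi, f xi = alpha + p * fst xi + q * snd xi) ->
  (forall xi, A xi -> boxM M xi /\ Rabs (f xi) < delta) ->
  meas_le A (4 * M * delta / rho).
Proof.
  intros HM Hd Hr Hpq Hf HA. destruct Hpq as [Hp|Hq].
  - assert (p <> 0) by (intro; subst; rewrite Rabs_R0 in Hp; lra).
    eapply meas_le_mono; [ | | apply (strip M alpha p q delta f HM Hd H Hf)].
    + intros xi Hxi. destruct (HA xi Hxi) as [[? ?] ?]. auto.
    + unfold Rdiv. apply Rmult_le_compat_l; [nra|]. apply Rinv_le_contravar; lra.
  - assert (q <> 0) by (intro; subst; rewrite Rabs_R0 in Hq; lra).
    pose proof (strip M alpha q p delta (fun xi => f (snd xi, fst xi)) HM Hd H) as Hs.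
    assert (Hs' := meas_le_swap _ _ (Hs ltac:(intros [u v]; simpl; rewrite Hf; simpl; ring))).
    eapply meas_le_mono; [ | | apply Hs'].
    + intros [u v] Hxi. destruct (HA _ Hxi) as [[? ?] ?]. simpl in *. auto.
    + unfold Rdiv. apply Rmult_le_compat_l; [nra|]. apply Rinv_le_contravar; lra.
Qed.

Lemma union_Z (A : pt -> Prop) (B : Z -> pt -> Prop) (J : nat) x :
  (forall xi, A xi -> exists j, (Z.abs j <= Z.of_nat J)%Z /\ B j xi) ->
  (forall j, meas_le (B j) x) -> 0 <= x -> meas_le A ((2 * INR J + 1) * x).
Proof.
  intros HA HB Hx.
  replace (2 * INR J + 1) with (INR (S (2 * J))) by (rewrite S_INR, mult_INR; simpl; ring).
  apply (meas_le_finite A (fun n => B (Z.of_nat n - Z.of_nat J)%Z)); auto.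
  intros xi Hxi. destruct (HA xi Hxi) as [j [Hj HBj]].
  exists (Z.to_nat (j + Z.of_nat J)). split; [lia|].
  replace (Z.of_nat (Z.to_nat (j + Z.of_nat J)) - Z.of_nat J)%Z with j by lia. exact HBj.
Qed.

Lemma union_sign (A : pt -> Prop) (B : R -> pt -> Prop) x :
  (forall xi, A xi -> B 1 xi \/ B (-1) xi) ->
  meas_le (B 1) x -> meas_le (B (-1)) x -> 0 <= x -> meas_le A (2 * x).
Proof.
  intros HA H1 H2 Hx. replace 2 with (INR (S 1)) by (simpl; ring).
  apply (meas_le_finite A (fun n => if Nat.eq_dec n 0 then B 1 else B (-1))); auto.
  - intros xi Hxi. destruct (HA xi Hxi).
    + exists 0%nat. simpl. split; [lia|auto].
    + exists 1%nat. simpl. split; [lia|auto].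
  - intros n _. destruct (Nat.eq_dec n 0); auto.
Qed.

Definition sP := 4 * PI.
Lemma sP_pos : 0 < sP.
Proof. unfold sP. pose proof PI_RGT_0. lra. Qed.

Lemma kdot_dec n1 n2 c eps k1 k2 xi :
  kdot n1 n2 c eps k1 k2 xi = kdot n1 n2 c eps k1 k2 (0,0)
   + / sP * (IZR (n1 - n2) * IZR k1 * fst xi + IZR (n2 - n1) * IZR k2 * snd xi).
Proof. unfold kdot, omega1, omega2, sP. simpl. ring. Qed.

Lemma Om_dec n1 n2 c eps j xi :
  Omega n1 n2 c eps j xi = Omega n1 n2 c eps j (0,0)
   + / sP * (IZR n1 * fst xi + IZR n2 * snd xi).
Proof. unfold Omega, sP. simpl. ring. Qed.

Lemma Om0 n1 n2 c eps j :
  Omega n1 n2 c eps j (0,0) = / eps ^ 4 * IZR j ^ 2 + c / sP * IZR j.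
Proof. unfold Omega, sP. simpl. unfold Rdiv. ring. Qed.

Lemma Rabs_ge_sub (x y : R) : Rabs (x + y) >= Rabs x - Rabs y.
Proof. pose proof (Rabs_triang (x + y) (- y)). rewrite Rabs_Ropp in H.
  replace (x + y + - y) with x in H by ring. lra. Qed.

Lemma abs_ge1 (z : Z) : z <> 0%Z -> 1 <= Rabs (IZR z).
Proof. intros H. rewrite <- abs_IZR. apply IZR_le. lia. Qed.

Definition Wc (n1 n2 : Z) (c eps M : R) :=
  / eps ^ 4 * IZR n2 ^ 2 + (IZR n1 + IZR n2) * c / sP + 4 * M / sP.

Lemma omega_bounds n1 n2 c eps M xi :
  (0 < n1)%Z -> (n2 - n1 = 4)%Z -> c > 0 -> eps > 0 -> boxM M xi ->
  Rabs (omega1 n1 n2 c eps xi) <= Wc n1 n2 c eps M /\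
  Rabs (omega2 n1 n2 c eps xi) <= Wc n1 n2 c eps M.
Proof.
  intros Hn1 Hd Hc He [Hu Hv].
  assert (HN2 : IZR n2 = IZR n1 + 4) by (rewrite <- plus_IZR; f_equal; lia).
  assert (HN1 : 0 < IZR n1) by (apply IZR_lt; lia).
  assert (HE : 0 < / eps ^ 4) by (apply Rinv_0_lt_compat, pow_lt; lra).
  pose proof sP_pos as Hs.
  assert (Hs' : 0 < / sP) by (apply Rinv_0_lt_compat; lra).
  unfold omega1, omega2, Wc. fold sP.
  rewrite plus_IZR, !minus_IZR, HN2. unfold Rdiv.
  assert (HA : forall a b d, 0 <= a -> 0 <= b -> Rabs d <= 4 * M * / sP ->
             Rabs (a + b + d) <= a + b + 4 * M * / sP).
  { intros a b d Ha Hb Hdd. eapply Rle_trans; [apply Rabs_triang|].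
    rewrite Rabs_right by lra. lra. }
  assert (HN12 : / eps ^ 4 * IZR n1 ^ 2 <= / eps ^ 4 * (IZR n1 + 4) ^ 2).
  { apply Rmult_le_compat_l; lra || nra. }
  split.
  - eapply Rle_trans; [apply HA|].
    + apply Rmult_le_pos; [lra|]. nra.
    + apply Rmult_le_pos; [|lra]. apply Rmult_le_pos; lra.
    + replace (/ sP * (IZR n1 - (IZR n1 + 4)) * fst xi) with (- (4 * / sP) * fst xi) by ring.
      rewrite Rabs_mult, Rabs_Ropp, (Rabs_right (4 * / sP)) by lra. nra.
    + replace (/ sP * (IZR n1 + (IZR n1 + 4)) * c) with ((IZR n1 + (IZR n1 + 4)) * c * / sP) by ring. lra.
  - eapply Rle_trans; [apply HA|].
    + apply Rmult_le_pos; [lra|]. nra.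
    + apply Rmult_le_pos; [|lra]. apply Rmult_le_pos; lra.
    + replace (/ sP * (IZR n1 + 4 - IZR n1) * snd xi) with ((4 * / sP) * snd xi) by ring.
      rewrite Rabs_mult, (Rabs_right (4 * / sP)) by lra. nra.
    + replace (/ sP * (IZR n1 + (IZR n1 + 4)) * c) with ((IZR n1 + (IZR n1 + 4)) * c * / sP) by ring. lra.
Qed.

Lemma w_bound n1 n2 c eps M k1 k2 xi :
  (0 < n1)%Z -> (n2 - n1 = 4)%Z -> c > 0 -> eps > 0 -> boxM M xi ->
  Rabs (kdot n1 n2 c eps k1 k2 xi) <= knorm k1 k2 * Wc n1 n2 c eps M.
Proof.
  intros H1 H2 H3 H4 H5. destruct (omega_bounds n1 n2 c eps M xi H1 H2 H3 H4 H5) as [A B].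
  unfold kdot, knorm. rewrite plus_IZR, !abs_IZR.
  eapply Rle_trans; [apply Rabs_triang|]. rewrite !Rabs_mult.
  pose proof (Rabs_pos (IZR k1)). pose proof (Rabs_pos (IZR k2)). nra.
Qed.

Definition Pc (n1 n2 : Z) (M : R) := (IZR n1 + IZR n2) * M / sP.

Lemma L_bound n1 n2 M xi : (0 < n1)%Z -> (n2 - n1 = 4)%Z -> boxM M xi ->
  Rabs (/ sP * (IZR n1 * fst xi + IZR n2 * snd xi)) <= Pc n1 n2 M.
Proof.
  intros H1 H2 [Hu Hv].
  assert (HN2 : IZR n2 = IZR n1 + 4) by (rewrite <- plus_IZR; f_equal; lia).
  assert (HN1 : 0 < IZR n1) by (apply IZR_lt; lia).
  pose proof sP_pos as Hs. assert (Hs' : 0 < / sP) by (apply Rinv_0_lt_compat; lra).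
  unfold Pc. rewrite Rabs_mult, Rabs_right by lra. unfold Rdiv.
  rewrite Rmult_comm. apply Rmult_le_compat_r; [lra|].
  eapply Rle_trans; [apply Rabs_triang|]. rewrite !Rabs_mult, (Rabs_right (IZR n1)), (Rabs_right (IZR n2)) by lra. nra.
Qed.

Lemma res2_core (E cs gk a P W m : R) :
  0 < E -> 0 < cs -> 2 * cs < E -> 0 <= gk <= E / 8 -> 1 <= a -> 0 <= P -> 0 <= W -> 1 <= m ->
  E * a ^ 2 - cs * a - P - m * W < gk * a ^ 2 -> a * E <= 4 * (2 * P + W) * m.
Proof.
  intros. assert (Ha2 : a <= a ^ 2) by (simpl; nra).
  assert (gk * a ^ 2 <= E / 8 * a ^ 2) by (apply Rmult_le_compat_r; lra).
  assert (cs * a <= E / 2 * a) by (apply Rmult_le_compat_r; lra).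
  assert (E * a <= E * a ^ 2) by (apply Rmult_le_compat_l; lra).
  assert (P <= P * m) by nra. assert (W * m >= 0) by nra. nra.
Qed.

Lemma res3_core (E cs gk a b P W m : R) :
  0 < E -> 0 < cs -> 2 * cs < E -> 0 <= gk <= E / 8 -> 1 <= a -> 1 <= b -> 0 <= P -> 0 <= W -> 1 <= m ->
  E * (a ^ 2 + b ^ 2) - cs * (a + b) - 2 * P - m * W < gk * (a + b) ^ 2 ->
  a * E <= 4 * (2 * P + W) * m /\ b * E <= 4 * (2 * P + W) * m.
Proof.
  intros. assert (gk * (a + b) ^ 2 <= E / 8 * (2 * (a ^ 2 + b ^ 2))).
  { assert ((a + b) ^ 2 <= 2 * (a ^ 2 + b ^ 2)) by (pose proof (pow2_ge_0 (a - b)); simpl in *; nra).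
    assert (gk * (a + b) ^ 2 <= E / 8 * (a + b) ^ 2) by (apply Rmult_le_compat_r; [apply pow2_ge_0|lra]).
    assert (E / 8 * (a + b) ^ 2 <= E / 8 * (2 * (a ^ 2 + b ^ 2))) by (apply Rmult_le_compat_l; lra).
    lra. }
  assert (a <= a ^ 2) by (simpl; nra). assert (b <= b ^ 2) by (simpl; nra).
  assert (cs * (a + b) <= E / 2 * (a + b)) by (apply Rmult_le_compat_r; lra).
  assert (E * a <= E * a ^ 2) by (apply Rmult_le_compat_l; lra).
  assert (E * b <= E * b ^ 2) by (apply Rmult_le_compat_l; lra).
  assert (2 * P <= 2 * P * m) by nra. assert (0 <= E * a) by nra. assert (0 <= E * b) by nra.
  assert (W * m >= 0) by nra.
  split; nra.
Qed.

Lemma res4_core (E cs gk a b W m : R) :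
  0 < E -> 0 < cs -> 2 * cs < E -> 0 <= gk <= E / 8 -> b + 1 <= a -> 0 <= b -> 0 <= W -> 1 <= m ->
  E * (a ^ 2 - b ^ 2) - cs * (a + b) - m * W < gk * ((a - b) * (a + b)) ->
  a * E <= 4 * W * m /\ b * E <= 4 * W * m.
Proof.
  intros. assert (Hab : a + b <= (a - b) * (a + b)) by nra.
  assert (gk * ((a - b) * (a + b)) <= E / 8 * ((a - b) * (a + b))).
  { apply Rmult_le_compat_r; lra. }
  assert (cs * (a + b) <= E / 2 * (a + b)) by (apply Rmult_le_compat_r; lra).
  assert (E * (a + b) <= E * ((a - b) * (a + b))) by (apply Rmult_le_compat_l; lra).
  assert (E * (a ^ 2 - b ^ 2) = E * ((a - b) * (a + b))) by ring.
  assert (0 <= E * a) by nra. assert (0 <= E * b) by nra.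
  split; nra.
Qed.

Lemma res5_core (cs gk a W m : R) :
  0 < cs -> 0 <= gk <= cs -> 0 <= a -> 0 <= W -> 1 <= m ->
  2 * cs * a - m * W < gk * a -> a * cs <= W * m.
Proof. intros. assert (gk * a <= cs * a) by (apply Rmult_le_compat_r; lra). nra. Qed.

Lemma strip_lin (A : pt -> Prop) M delta (f : pt -> R) (z1 z2 : Z) :
  0 < M -> 0 < delta -> (z1 <> 0%Z \/ z2 <> 0%Z) ->
  (forall xi, f xi = f (0,0) + / sP * (IZR z1 * fst xi + IZR z2 * snd xi)) ->
  (forall xi, A xi -> boxM M xi /\ Rabs (f xi) < delta) ->
  meas_le A (4 * M * delta * sP).
Proof.
  intros HM Hd Hz Hf HA. pose proof sP_pos.
  replace (4 * M * delta * sP) with (4 * M * delta / / sP) by (field; lra).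
  apply (strip_gen A M (f (0,0)) (/ sP * IZR z1) (/ sP * IZR z2) delta (/ sP) f); auto.
  - apply Rinv_0_lt_compat; lra.
  - rewrite !Rabs_mult, Rabs_right by (left; apply Rinv_0_lt_compat; lra).
    assert (0 < / sP) by (apply Rinv_0_lt_compat; lra).
    destruct Hz as [Hz|Hz]; [left|right]; pose proof (abs_ge1 _ Hz); nra.
  - intros xi. rewrite Hf. ring.
Qed.

Definition Hyp (n1 n2 : Z) (c eps M gamma kt : R) (k1 k2 : Z) (J : nat) : Prop :=
  (0 < n1)%Z /\ Z.odd n1 = true /\ (n2 - n1 = 4)%Z /\ c > 0 /\ eps > 0 /\
  2 * (c / sP) < / eps ^ 4 /\ 0 < M /\ 0 < gamma /\ gamma <= / eps ^ 4 / 8 /\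
  gamma <= c / sP /\ 0 < kt <= 1 /\ 1 <= knorm k1 k2 /\ (k1 <> 0%Z \/ k2 <> 0%Z) /\
  4 * (2 * Pc n1 n2 M + Wc n1 n2 c eps M) * knorm k1 k2 <= / eps ^ 4 * INR J /\
  Wc n1 n2 c eps M * knorm k1 k2 <= c / sP * INR J.

Definition dl (gamma kt : R) (J : nat) := gamma * (2 * INR J + 1) ^ 2 * kt.
Definition UU (M gamma kt : R) (J : nat) :=
  2 * (2 * INR J + 1) ^ 2 * (4 * M * dl gamma kt J * sP).

Lemma UU_ge (M gamma kt : R) (J : nat) : 0 < M -> 0 < gamma -> 0 < kt ->
  0 < 4 * M * dl gamma kt J * sP /\ 1 <= 2 * INR J + 1.
Proof.
  intros. pose proof (pos_INR J). pose proof sP_pos. unfold dl.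
  assert (0 < (2 * INR J + 1) ^ 2) by (apply pow_lt; lra).
  split; [|lra].
  apply Rmult_lt_0_compat; [|lra]. apply Rmult_lt_0_compat; [lra|].
  apply Rmult_lt_0_compat; [|lra]. apply Rmult_lt_0_compat; lra.
Qed.

Lemma w_lin n1 n2 c eps k1 k2 xi :
  (n2 - n1 = 4)%Z ->
  kdot n1 n2 c eps k1 k2 xi = kdot n1 n2 c eps k1 k2 (0,0)
   + / sP * (IZR (-4 * k1) * fst xi + IZR (4 * k2) * snd xi).
Proof.
  intros H. rewrite kdot_dec. replace (n1 - n2)%Z with (-4)%Z by lia.
  replace (n2 - n1)%Z with 4%Z by lia. rewrite !mult_IZR. ring.
Qed.

Lemma T1 n1 n2 c eps M gamma kt k1 k2 J :
  Hyp n1 n2 c eps M gamma kt k1 k2 J ->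
  meas_le (fun xi => boxM M xi /\ Rabs (kdot n1 n2 c eps k1 k2 xi) < gamma * kt)
    (UU M gamma kt J).
Proof.
  intros H. pose proof H as (Hn1 & Hodd & Hd & Hc & He & Hce & HM & Hg & Hg1 & Hg2 & Hkt & Hm & Hk & HJ1 & HJ2).
  destruct (UU_ge M gamma kt J HM Hg (proj1 Hkt)) as [HS HJ].
  eapply meas_le_mono; [ | | apply (strip_lin _ M (dl gamma kt J) (kdot n1 n2 c eps k1 k2) (-4 * k1) (4 * k2))].
  - intros xi Hxi. exact Hxi.
  - unfold UU. assert (1 <= (2 * INR J + 1) ^ 2) by (apply pow_R1_Rle; lra).
    set (X := 4 * M * dl gamma kt J * sP) in *. set (y := (2 * INR J + 1) ^ 2) in *.
    assert (0 <= (y - 1) * X) by (apply Rmult_le_pos; lra). nra.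
  - exact HM.
  - unfold dl. assert (0 < (2 * INR J + 1) ^ 2) by (apply pow_lt; lra).
    apply Rmult_lt_0_compat; [apply Rmult_lt_0_compat|]; lra.
  - lia.
  - intros xi. apply w_lin; auto.
  - intros xi [Hb Hw]. split; auto. unfold dl.
    assert (gamma * kt <= gamma * (2 * INR J + 1) ^ 2 * kt); [|lra].
    assert (1 <= (2 * INR J + 1) ^ 2) by (apply pow_R1_Rle; lra).
    assert (0 < gamma * kt) by (apply Rmult_lt_0_compat; lra).
    replace (gamma * (2 * INR J + 1) ^ 2 * kt) with ((2 * INR J + 1) ^ 2 * (gamma * kt)) by ring.
    nra.
Qed.

Definition Lx (n1 n2 : Z) (xi : pt) := / sP * (IZR n1 * fst xi + IZR n2 * snd xi).

Lemma Om_exp n1 n2 c eps j xi :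
  Omega n1 n2 c eps j xi = / eps ^ 4 * IZR j ^ 2 + c / sP * IZR j + Lx n1 n2 xi.
Proof. rewrite Om_dec, Om0. unfold Lx. ring. Qed.

Lemma PW_nonneg n1 n2 c eps M : (0 < n1)%Z -> (n2 - n1 = 4)%Z -> c > 0 -> eps > 0 -> 0 < M ->
  0 <= Pc n1 n2 M /\ 0 <= Wc n1 n2 c eps M.
Proof.
  intros H1 H2 Hc He HM.
  assert (HN2 : IZR n2 = IZR n1 + 4) by (rewrite <- plus_IZR; f_equal; lia).
  assert (HN1 : 0 < IZR n1) by (apply IZR_lt; lia).
  pose proof sP_pos. assert (0 < / sP) by (apply Rinv_0_lt_compat; lra).
  assert (HE : 0 < / eps ^ 4) by (apply Rinv_0_lt_compat, pow_lt; lra).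
  unfold Pc, Wc, Rdiv. rewrite HN2. split.
  - apply Rmult_le_pos; [apply Rmult_le_pos|]; lra.
  - assert (0 <= / eps ^ 4 * (IZR n1 + 4) ^ 2) by (apply Rmult_le_pos; [lra|apply pow2_ge_0]).
    assert (0 <= (IZR n1 + (IZR n1 + 4)) * c * / sP) by (apply Rmult_le_pos; [apply Rmult_le_pos|]; lra).
    assert (0 <= 4 * M * / sP) by (apply Rmult_le_pos; lra). lra.
Qed.

Lemma zabs_ge1 j : j <> 0%Z -> 1 <= zabs j.
Proof. intros. unfold zabs. apply IZR_le. lia. Qed.

Lemma zabs_nonneg j : 0 <= zabs j.
Proof. unfold zabs. apply IZR_le. lia. Qed.

Lemma zabs_sq j : zabs j ^ 2 = IZR j ^ 2.
Proof. unfold zabs. rewrite abs_IZR. apply pow2_abs. Qed.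

Lemma zabs_R j : zabs j = Rabs (IZR j).
Proof. unfold zabs. apply abs_IZR. Qed.

Lemma zabs_le_J j (J : nat) : zabs j <= INR J -> (Z.abs j <= Z.of_nat J)%Z.
Proof. unfold zabs. rewrite INR_IZR_INZ. apply le_IZR. Qed.

Lemma Rabs_ge3 x y z : Rabs (x + y + z) >= Rabs x - Rabs y - Rabs z.
Proof. pose proof (Rabs_ge_sub (x + y) z). pose proof (Rabs_ge_sub x y). lra. Qed.

Lemma sign_abs s x : (s = 1 \/ s = -1) -> Rabs (s * x) = Rabs x.
Proof. intros [->| ->]. rewrite Rmult_1_l; reflexivity. replace (-1 * x) with (- x) by ring. apply Rabs_Ropp. Qed.

Lemma div_le a E X J : 0 < E -> a * E <= X -> X <= E * J -> a <= J.
Proof. intros. apply Rmult_le_reg_r with E; lra. Qed.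

Lemma res_single n1 n2 c eps M gamma kt k1 k2 J j s xi :
  Hyp n1 n2 c eps M gamma kt k1 k2 J -> boxM M xi -> j <> 0%Z -> (s = 1 \/ s = -1) ->
  Rabs (kdot n1 n2 c eps k1 k2 xi + s * Omega n1 n2 c eps j xi) < gamma * zabs j ^ 2 * kt ->
  zabs j <= INR J.
Proof.
  intros H Hb Hj Hs Hlt.
  pose proof H as (Hn1 & Hodd & Hd & Hc & He & Hce & HM & Hg & Hg1 & Hg2 & Hkt & Hm & Hk & HJ1 & HJ2).
  destruct (PW_nonneg n1 n2 c eps M Hn1 Hd Hc He HM) as [HP HW].
  pose proof (w_bound n1 n2 c eps M k1 k2 xi Hn1 Hd Hc He Hb) as Hw.
  pose proof (L_bound n1 n2 M xi Hn1 Hd Hb) as HL. fold (Lx n1 n2 xi) in HL.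
  assert (HE : 0 < / eps ^ 4) by (apply Rinv_0_lt_compat, pow_lt; lra).
  assert (Hcs : 0 < c / sP) by (apply Rdiv_lt_0_compat; [lra|apply sP_pos]).
  pose proof (Rabs_ge_sub (s * Omega n1 n2 c eps j xi) (kdot n1 n2 c eps k1 k2 xi)) as H1.
  rewrite Rplus_comm in H1. rewrite sign_abs in H1 by auto.
  rewrite Om_exp in H1, Hlt.
  pose proof (Rabs_ge3 (/ eps ^ 4 * IZR j ^ 2) (c / sP * IZR j) (Lx n1 n2 xi)) as H2.
  rewrite Rabs_mult, (Rabs_right (/ eps ^ 4)) in H2 by lra.
  rewrite Rabs_mult, (Rabs_right (c / sP)) in H2 by lra.
  rewrite <- RPow_abs in H2. rewrite <- !zabs_R in H2.
  assert (Hgk : 0 <= gamma * kt <= / eps ^ 4 / 8).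
  { split. apply Rmult_le_pos; lra. assert (gamma * kt <= gamma) by nra. lra. }
  assert (Hres := res2_core (/ eps ^ 4) (c / sP) (gamma * kt) (zabs j) (Pc n1 n2 M) (Wc n1 n2 c eps M) (knorm k1 k2)
     HE Hcs Hce Hgk (zabs_ge1 j Hj) HP HW Hm).
  apply (div_le _ (/ eps ^ 4) (4 * (2 * Pc n1 n2 M + Wc n1 n2 c eps M) * knorm k1 k2)); auto.
  apply Hres.
  replace (gamma * kt * zabs j ^ 2) with (gamma * zabs j ^ 2 * kt) by ring.
  assert (knorm k1 k2 * Wc n1 n2 c eps M = knorm k1 k2 * Wc n1 n2 c eps M) by reflexivity.
  lra.
Qed.

Lemma dl_pos gamma kt J : 0 < gamma -> 0 < kt -> 0 < dl gamma kt J.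
Proof. intros. unfold dl. pose proof (pos_INR J).
  assert (0 < (2 * INR J + 1) ^ 2) by (apply pow_lt; lra).
  apply Rmult_lt_0_compat; [apply Rmult_lt_0_compat|]; lra. Qed.

Lemma le_dl gamma kt J t : 0 < gamma -> 0 < kt -> 0 <= t <= (2 * INR J + 1) ^ 2 ->
  gamma * t * kt <= dl gamma kt J.
Proof. intros. unfold dl. assert (0 < gamma * kt) by (apply Rmult_lt_0_compat; lra).
  replace (gamma * t * kt) with (t * (gamma * kt)) by ring.
  replace (gamma * (2 * INR J + 1) ^ 2 * kt) with ((2 * INR J + 1) ^ 2 * (gamma * kt)) by ring.
  apply Rmult_le_compat_r; lra. Qed.

Lemma sq_le_J a (J : nat) : 0 <= a <= INR J -> a ^ 2 <= (2 * INR J + 1) ^ 2.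
Proof. intros. pose proof (pos_INR J). apply pow_incr. lra. Qed.

Lemma odd_nz n1 k z : Z.odd n1 = true -> (z = n1 \/ z = (-n1)%Z) -> (-4 * k + z <> 0)%Z.
Proof. intros H Hz. apply Z.odd_spec in H. destruct H as [b Hb]. lia. Qed.

Lemma odd_nz2 n1 k z : Z.odd n1 = true -> (z = n1 \/ z = (-n1)%Z) -> (-4 * k + 2 * z <> 0)%Z.
Proof. intros H Hz. apply Z.odd_spec in H. destruct H as [b Hb]. lia. Qed.

Lemma T2 n1 n2 c eps M gamma kt k1 k2 J :
  Hyp n1 n2 c eps M gamma kt k1 k2 J ->
  meas_le (fun xi => boxM M xi /\ exists j, inZ1 n1 n2 j /\
     (Rabs (kdot n1 n2 c eps k1 k2 xi + Omega n1 n2 c eps j xi) < gamma * zabs j ^ 2 * kt \/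
      Rabs (kdot n1 n2 c eps k1 k2 xi - Omega n1 n2 c eps j xi) < gamma * zabs j ^ 2 * kt))
    (UU M gamma kt J).
Proof.
  intros H. pose proof H as (Hn1 & Hodd & Hd & Hc & He & Hce & HM & Hg & Hg1 & Hg2 & Hkt & Hm & Hk & HJ1 & HJ2).
  destruct (UU_ge M gamma kt J HM Hg (proj1 Hkt)) as [HS HJ].
  set (S0 := 4 * M * dl gamma kt J * sP) in *.
  set (B := fun s j xi => boxM M xi /\
     Rabs (kdot n1 n2 c eps k1 k2 xi + s * Omega n1 n2 c eps j xi) < dl gamma kt J).
  assert (HB : forall s j, (s = 1 \/ s = -1) -> meas_le (B s j) S0).
  { intros s j Hs. unfold S0.
    destruct Hs as [-> | ->].
    - apply (strip_lin _ M _ (fun xi => kdot n1 n2 c eps k1 k2 xi + 1 * Omega n1 n2 c eps j xi)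
              (-4 * k1 + n1) (4 * k2 + n2)); auto.
      + apply dl_pos; lra.
      + left. apply (odd_nz n1); auto.
      + intros xi. rewrite (w_lin n1 n2 c eps k1 k2 xi Hd), (Om_dec n1 n2 c eps j xi).
        rewrite (w_lin n1 n2 c eps k1 k2 (0,0) Hd), (Om_dec n1 n2 c eps j (0,0)).
        rewrite !plus_IZR, !mult_IZR. simpl. ring.
    - apply (strip_lin _ M _ (fun xi => kdot n1 n2 c eps k1 k2 xi + -1 * Omega n1 n2 c eps j xi)
              (-4 * k1 + - n1) (4 * k2 + - n2)); auto.
      + apply dl_pos; lra.
      + left. apply (odd_nz n1); auto.
      + intros xi. rewrite (w_lin n1 n2 c eps k1 k2 xi Hd), (Om_dec n1 n2 c eps j xi).
        rewrite (w_lin n1 n2 c eps k1 k2 (0,0) Hd), (Om_dec n1 n2 c eps j (0,0)).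
        rewrite !plus_IZR, !mult_IZR, !opp_IZR. simpl. ring. }
  eapply meas_le_mono; [ | | apply (union_Z _ (fun j xi => B 1 j xi \/ B (-1) j xi) J (2 * S0))].
  - intros xi Hxi. exact Hxi.
  - unfold UU. fold S0. pose proof (pos_INR J).
    assert (2 * INR J + 1 <= (2 * INR J + 1) ^ 2) by (simpl; nra).
    assert (0 <= (2 * INR J + 1) * S0) by (apply Rmult_le_pos; lra).
    nra.
  - intros xi [Hb [j [Hj Hor]]]. exists j.
    assert (Hs : exists s, (s = 1 \/ s = -1) /\
       Rabs (kdot n1 n2 c eps k1 k2 xi + s * Omega n1 n2 c eps j xi) < gamma * zabs j ^ 2 * kt).
    { destruct Hor as [Ho|Ho]; [exists 1|exists (-1)]; split; auto;
      [rewrite Rmult_1_l|replace (-1 * Omega n1 n2 c eps j xi) with (- Omega n1 n2 c eps j xi) by ring]; exact Ho. }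
    destruct Hs as [s [Hs Ho]].
    assert (HjJ := res_single n1 n2 c eps M gamma kt k1 k2 J j s xi H Hb (proj1 Hj) Hs Ho).
    split; [apply zabs_le_J; auto|].
    assert (gamma * zabs j ^ 2 * kt <= dl gamma kt J).
    { apply le_dl; try lra. split; [apply pow2_ge_0|]. apply sq_le_J. split; [apply zabs_nonneg|auto]. }
    destruct Hs as [-> | ->]; [left|right]; split; auto; lra.
  - intros j. apply union_sign with (B := fun s => B s j).
    + auto.
    + apply HB; auto.
    + apply HB; auto.
    + lra.
  - lra.
Qed.

Ltac gethyp H := pose proof H as (Hn1 & Hodd & Hd & Hc & He & Hce & HM & Hg & Hg1 & Hg2 & Hkt & Hm & Hk & HJ1 & HJ2).

Lemma res_pair n1 n2 c eps M gamma kt k1 k2 J i j s xi :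
  Hyp n1 n2 c eps M gamma kt k1 k2 J -> boxM M xi -> i <> 0%Z -> j <> 0%Z -> (s = 1 \/ s = -1) ->
  Rabs (kdot n1 n2 c eps k1 k2 xi + s * (Omega n1 n2 c eps i xi + Omega n1 n2 c eps j xi))
     < gamma * (zabs i + zabs j) ^ 2 * kt ->
  zabs i <= INR J /\ zabs j <= INR J.
Proof.
  intros H Hb Hi Hj Hs Hlt. gethyp H.
  destruct (PW_nonneg n1 n2 c eps M Hn1 Hd Hc He HM) as [HP HW].
  pose proof (w_bound n1 n2 c eps M k1 k2 xi Hn1 Hd Hc He Hb) as Hw.
  pose proof (L_bound n1 n2 M xi Hn1 Hd Hb) as HL. fold (Lx n1 n2 xi) in HL.
  assert (HE : 0 < / eps ^ 4) by (apply Rinv_0_lt_compat, pow_lt; lra).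
  assert (Hcs : 0 < c / sP) by (apply Rdiv_lt_0_compat; [lra|apply sP_pos]).
  rewrite !Om_exp in Hlt.
  set (X := / eps ^ 4 * IZR i ^ 2 + c / sP * IZR i + Lx n1 n2 xi + (/ eps ^ 4 * IZR j ^ 2 + c / sP * IZR j + Lx n1 n2 xi)) in *.
  pose proof (Rabs_ge_sub (s * X) (kdot n1 n2 c eps k1 k2 xi)) as H1.
  rewrite Rplus_comm in H1. rewrite sign_abs in H1 by auto.
  assert (HX : X = / eps ^ 4 * (zabs i ^ 2 + zabs j ^ 2) + c / sP * (IZR i + IZR j) + 2 * Lx n1 n2 xi).
  { unfold X. rewrite !zabs_sq. ring. }
  pose proof (Rabs_ge3 (/ eps ^ 4 * (zabs i ^ 2 + zabs j ^ 2)) (c / sP * (IZR i + IZR j)) (2 * Lx n1 n2 xi)) as H2.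
  rewrite <- HX in H2.
  rewrite Rabs_mult, (Rabs_right (/ eps ^ 4)) in H2 by lra.
  rewrite (Rabs_right (zabs i ^ 2 + zabs j ^ 2)) in H2 by (pose proof (pow2_ge_0 (zabs i)); pose proof (pow2_ge_0 (zabs j)); lra).
  rewrite (Rabs_mult (c / sP)), (Rabs_right (c / sP)) in H2 by lra.
  rewrite (Rabs_mult 2), (Rabs_right 2) in H2 by lra.
  assert (Rabs (IZR i + IZR j) <= zabs i + zabs j) by (rewrite !zabs_R; apply Rabs_triang).
  assert (c / sP * Rabs (IZR i + IZR j) <= c / sP * (zabs i + zabs j)) by (apply Rmult_le_compat_l; lra).
  assert (Hgk : 0 <= gamma * kt <= / eps ^ 4 / 8).
  { split. apply Rmult_le_pos; lra. assert (gamma * kt <= gamma) by nra. lra. }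
  assert (Hres := res3_core (/ eps ^ 4) (c / sP) (gamma * kt) (zabs i) (zabs j) (Pc n1 n2 M) (Wc n1 n2 c eps M) (knorm k1 k2)
     HE Hcs Hce Hgk (zabs_ge1 i Hi) (zabs_ge1 j Hj) HP HW Hm).
  destruct Hres as [R1 R2].
  - replace (gamma * kt * (zabs i + zabs j) ^ 2) with (gamma * (zabs i + zabs j) ^ 2 * kt) by ring. lra.
  - split; [exact (div_le _ _ _ _ HE R1 HJ1)|exact (div_le _ _ _ _ HE R2 HJ1)].
Qed.

Lemma res_diff n1 n2 c eps M gamma kt k1 k2 J i j xi :
  Hyp n1 n2 c eps M gamma kt k1 k2 J -> boxM M xi -> (Z.abs j < Z.abs i)%Z ->
  Rabs (kdot n1 n2 c eps k1 k2 xi + Omega n1 n2 c eps i xi - Omega n1 n2 c eps j xi)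
     < gamma * (zabs i - zabs j) * (zabs i + zabs j) * kt ->
  zabs i <= INR J /\ zabs j <= INR J.
Proof.
  intros H Hb Hij Hlt. gethyp H.
  destruct (PW_nonneg n1 n2 c eps M Hn1 Hd Hc He HM) as [HP HW].
  pose proof (w_bound n1 n2 c eps M k1 k2 xi Hn1 Hd Hc He Hb) as Hw.
  assert (HE : 0 < / eps ^ 4) by (apply Rinv_0_lt_compat, pow_lt; lra).
  assert (Hcs : 0 < c / sP) by (apply Rdiv_lt_0_compat; [lra|apply sP_pos]).
  assert (Hab : zabs j + 1 <= zabs i) by (unfold zabs; rewrite <- plus_IZR; apply IZR_le; lia).
  pose proof (zabs_nonneg j) as Hb0.
  rewrite !Om_exp in Hlt.
  set (X := / eps ^ 4 * (zabs i ^ 2 - zabs j ^ 2) + c / sP * (IZR i - IZR j)).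
  assert (HX : kdot n1 n2 c eps k1 k2 xi + (/ eps ^ 4 * IZR i ^ 2 + c / sP * IZR i + Lx n1 n2 xi) -
     (/ eps ^ 4 * IZR j ^ 2 + c / sP * IZR j + Lx n1 n2 xi) = X + kdot n1 n2 c eps k1 k2 xi).
  { unfold X. rewrite !zabs_sq. ring. }
  rewrite HX in Hlt.
  pose proof (Rabs_ge_sub X (kdot n1 n2 c eps k1 k2 xi)) as H1.
  pose proof (Rabs_ge_sub (/ eps ^ 4 * (zabs i ^ 2 - zabs j ^ 2)) (c / sP * (IZR i - IZR j))) as H2.
  fold X in H2.
  assert (Hpos : 0 <= zabs i ^ 2 - zabs j ^ 2) by (simpl; nra).
  rewrite Rabs_mult, (Rabs_right (/ eps ^ 4)), (Rabs_right (zabs i ^ 2 - zabs j ^ 2)) in H2 by lra.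
  rewrite (Rabs_mult (c / sP)), (Rabs_right (c / sP)) in H2 by lra.
  assert (Rabs (IZR i - IZR j) <= zabs i + zabs j).
  { rewrite !zabs_R. unfold Rminus. rewrite <- (Rabs_Ropp (IZR j)). apply Rabs_triang. }
  assert (c / sP * Rabs (IZR i - IZR j) <= c / sP * (zabs i + zabs j)) by (apply Rmult_le_compat_l; lra).
  assert (Hgk : 0 <= gamma * kt <= / eps ^ 4 / 8).
  { split. apply Rmult_le_pos; lra. assert (gamma * kt <= gamma) by nra. lra. }
  assert (Hres := res4_core (/ eps ^ 4) (c / sP) (gamma * kt) (zabs i) (zabs j) (Wc n1 n2 c eps M) (knorm k1 k2)
     HE Hcs Hce Hgk Hab Hb0 HW Hm).
  destruct Hres as [R1 R2].
  - replace (gamma * kt * ((zabs i - zabs j) * (zabs i + zabs j))) with (gamma * (zabs i - zabs j) * (zabs i + zabs j) * kt) by ring. lra.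
  - assert (4 * Wc n1 n2 c eps M * knorm k1 k2 <= 4 * (2 * Pc n1 n2 M + Wc n1 n2 c eps M) * knorm k1 k2) by nra.
    split; [apply (div_le _ _ _ _ HE R1)|apply (div_le _ _ _ _ HE R2)]; lra.
Qed.

Lemma res_anti n1 n2 c eps M gamma kt k1 k2 J j xi :
  Hyp n1 n2 c eps M gamma kt k1 k2 J -> boxM M xi ->
  Rabs (kdot n1 n2 c eps k1 k2 xi + Omega n1 n2 c eps j xi - Omega n1 n2 c eps (- j) xi)
     < gamma * zabs j * kt ->
  zabs j <= INR J.
Proof.
  intros H Hb Hlt. gethyp H.
  destruct (PW_nonneg n1 n2 c eps M Hn1 Hd Hc He HM) as [HP HW].
  pose proof (w_bound n1 n2 c eps M k1 k2 xi Hn1 Hd Hc He Hb) as Hw.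
  assert (Hcs : 0 < c / sP) by (apply Rdiv_lt_0_compat; [lra|apply sP_pos]).
  rewrite !Om_exp, opp_IZR in Hlt.
  replace (kdot n1 n2 c eps k1 k2 xi + (/ eps ^ 4 * IZR j ^ 2 + c / sP * IZR j + Lx n1 n2 xi) -
      (/ eps ^ 4 * (- IZR j) ^ 2 + c / sP * - IZR j + Lx n1 n2 xi))
    with (2 * (c / sP) * IZR j + kdot n1 n2 c eps k1 k2 xi) in Hlt by ring.
  pose proof (Rabs_ge_sub (2 * (c / sP) * IZR j) (kdot n1 n2 c eps k1 k2 xi)) as H1.
  rewrite Rabs_mult, (Rabs_right (2 * (c / sP))), <- zabs_R in H1 by lra.
  assert (Hgk : 0 <= gamma * kt <= c / sP).
  { split. apply Rmult_le_pos; lra. assert (gamma * kt <= gamma) by nra. lra. }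
  assert (Hres := res5_core (c / sP) (gamma * kt) (zabs j) (Wc n1 n2 c eps M) (knorm k1 k2)
     Hcs Hgk (zabs_nonneg j) HW Hm).
  apply (div_le _ (c / sP) (Wc n1 n2 c eps M * knorm k1 k2)); auto.
  apply Hres.
  replace (gamma * kt * zabs j) with (gamma * zabs j * kt) by ring. lra.
Qed.

Lemma UU_bounds M gamma kt J : 0 < M -> 0 < gamma -> 0 < kt ->
  let S0 := 4 * M * dl gamma kt J * sP in
  S0 <= UU M gamma kt J /\ (2 * INR J + 1) * S0 <= UU M gamma kt J /\
  (2 * INR J + 1) * (2 * S0) <= UU M gamma kt J /\
  (2 * INR J + 1) * ((2 * INR J + 1) * S0) <= UU M gamma kt J /\
  (2 * INR J + 1) * ((2 * INR J + 1) * (2 * S0)) <= UU M gamma kt J.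
Proof.
  intros HM Hg Hk S0. destruct (UU_ge M gamma kt J HM Hg Hk) as [HS HJ]. fold S0 in HS.
  unfold UU. fold S0. set (y := 2 * INR J + 1) in *.
  assert (y <= y ^ 2) by (simpl; nra). assert (1 <= y ^ 2) by lra.
  assert (0 <= (y - 1) * S0) by (apply Rmult_le_pos; lra).
  assert (0 <= (y^2 - 1) * S0) by (apply Rmult_le_pos; lra).
  assert (0 <= (y^2 - y) * S0) by (apply Rmult_le_pos; lra).
  replace (y ^ 2) with (y * y) in * by ring.
  repeat split; nra.
Qed.

Lemma T3 n1 n2 c eps M gamma kt k1 k2 J :
  Hyp n1 n2 c eps M gamma kt k1 k2 J ->
  meas_le (fun xi => boxM M xi /\ exists i j, inZ1 n1 n2 i /\ inZ1 n1 n2 j /\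
     (Rabs (kdot n1 n2 c eps k1 k2 xi + (Omega n1 n2 c eps i xi + Omega n1 n2 c eps j xi))
        < gamma * (zabs i + zabs j) ^ 2 * kt \/
      Rabs (kdot n1 n2 c eps k1 k2 xi - (Omega n1 n2 c eps i xi + Omega n1 n2 c eps j xi))
        < gamma * (zabs i + zabs j) ^ 2 * kt))
    (UU M gamma kt J).
Proof.
  intros H. gethyp H.
  destruct (UU_ge M gamma kt J HM Hg (proj1 Hkt)) as [HS HJ].
  destruct (UU_bounds M gamma kt J HM Hg (proj1 Hkt)) as (U1 & U2 & U3 & U4 & U5).
  set (S0 := 4 * M * dl gamma kt J * sP) in *.
  set (B := fun s i j xi => boxM M xi /\
     Rabs (kdot n1 n2 c eps k1 k2 xi + s * (Omega n1 n2 c eps i xi + Omega n1 n2 c eps j xi)) < dl gamma kt J).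
  assert (HB : forall s i j, (s = 1 \/ s = -1) -> meas_le (B s i j) S0).
  { intros s i j Hs. unfold S0.
    destruct Hs as [-> | ->].
    - apply (strip_lin _ M _ (fun xi => kdot n1 n2 c eps k1 k2 xi + 1 * (Omega n1 n2 c eps i xi + Omega n1 n2 c eps j xi))
              (-4 * k1 + 2 * n1) (4 * k2 + 2 * n2)); auto.
      + apply dl_pos; lra.
      + left. apply (odd_nz2 n1); auto.
      + intros xi. rewrite (w_lin n1 n2 c eps k1 k2 xi Hd), (Om_dec n1 n2 c eps i xi), (Om_dec n1 n2 c eps j xi).
        rewrite (w_lin n1 n2 c eps k1 k2 (0,0) Hd), (Om_dec n1 n2 c eps i (0,0)), (Om_dec n1 n2 c eps j (0,0)).
        rewrite !plus_IZR, !mult_IZR. simpl. ring.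
    - apply (strip_lin _ M _ (fun xi => kdot n1 n2 c eps k1 k2 xi + -1 * (Omega n1 n2 c eps i xi + Omega n1 n2 c eps j xi))
              (-4 * k1 + 2 * - n1) (4 * k2 + 2 * - n2)); auto.
      + apply dl_pos; lra.
      + left. apply (odd_nz2 n1); auto.
      + intros xi. rewrite (w_lin n1 n2 c eps k1 k2 xi Hd), (Om_dec n1 n2 c eps i xi), (Om_dec n1 n2 c eps j xi).
        rewrite (w_lin n1 n2 c eps k1 k2 (0,0) Hd), (Om_dec n1 n2 c eps i (0,0)), (Om_dec n1 n2 c eps j (0,0)).
        rewrite !plus_IZR, !mult_IZR, !opp_IZR. simpl. ring. }
  eapply meas_le_mono; [ | | apply (union_Z _ (fun i xi => exists j, (Z.abs j <= Z.of_nat J)%Z /\ (B 1 i j xi \/ B (-1) i j xi)) J ((2 * INR J + 1) * (2 * S0)))].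
  - intros xi Hxi. exact Hxi.
  - exact U5.
  - intros xi [Hb [i [j [Hi [Hj Hor]]]]].
    assert (Hs : exists s, (s = 1 \/ s = -1) /\
       Rabs (kdot n1 n2 c eps k1 k2 xi + s * (Omega n1 n2 c eps i xi + Omega n1 n2 c eps j xi))
        < gamma * (zabs i + zabs j) ^ 2 * kt).
    { destruct Hor as [Ho|Ho]; [exists 1|exists (-1)]; split; auto;
      [rewrite Rmult_1_l|replace (-1 * (Omega n1 n2 c eps i xi + Omega n1 n2 c eps j xi))
          with (- (Omega n1 n2 c eps i xi + Omega n1 n2 c eps j xi)) by ring]; exact Ho. }
    destruct Hs as [s [Hs Ho]].
    destruct (res_pair n1 n2 c eps M gamma kt k1 k2 J i j s xi H Hb (proj1 Hi) (proj1 Hj) Hs Ho) as [HiJ HjJ].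
    exists i. split; [apply zabs_le_J; auto|]. exists j. split; [apply zabs_le_J; auto|].
    assert (gamma * (zabs i + zabs j) ^ 2 * kt <= dl gamma kt J).
    { apply le_dl; try lra. split; [apply pow2_ge_0|]. apply pow_incr.
      pose proof (zabs_nonneg i). pose proof (zabs_nonneg j). lra. }
    destruct Hs as [-> | ->]; [left|right]; split; auto; lra.
  - intros i. apply union_Z with (B := fun j xi => B 1 i j xi \/ B (-1) i j xi).
    + intros xi [j [Hj Hor]]. exists j. auto.
    + intros j. apply union_sign with (B := fun s => B s i j); auto; try apply HB; auto; lra.
    + lra.
  - nra.
Qed.

Lemma T4 n1 n2 c eps M gamma kt k1 k2 J :
  Hyp n1 n2 c eps M gamma kt k1 k2 J ->
  meas_le (fun xi => boxM M xi /\ exists i j, inZ1 n1 n2 i /\ inZ1 n1 n2 j /\ zabs i <> zabs j /\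
     Rabs (kdot n1 n2 c eps k1 k2 xi + Omega n1 n2 c eps i xi - Omega n1 n2 c eps j xi)
        < gamma * (zabs i - zabs j) * (zabs i + zabs j) * kt)
    (UU M gamma kt J).
Proof.
  intros H. gethyp H.
  destruct (UU_ge M gamma kt J HM Hg (proj1 Hkt)) as [HS HJ].
  destruct (UU_bounds M gamma kt J HM Hg (proj1 Hkt)) as (U1 & U2 & U3 & U4 & U5).
  set (S0 := 4 * M * dl gamma kt J * sP) in *.
  set (B := fun i j xi => boxM M xi /\
     Rabs (kdot n1 n2 c eps k1 k2 xi + Omega n1 n2 c eps i xi - Omega n1 n2 c eps j xi) < dl gamma kt J).
  assert (HB : forall i j, meas_le (B i j) S0).
  { intros i j. unfold S0.
    apply (strip_lin _ M _ (fun xi => kdot n1 n2 c eps k1 k2 xi + Omega n1 n2 c eps i xi - Omega n1 n2 c eps j xi)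
              (-4 * k1) (4 * k2)); auto.
    + apply dl_pos; lra.
    + lia.
    + intros xi. rewrite (w_lin n1 n2 c eps k1 k2 xi Hd), (Om_dec n1 n2 c eps i xi), (Om_dec n1 n2 c eps j xi).
      rewrite (w_lin n1 n2 c eps k1 k2 (0,0) Hd), (Om_dec n1 n2 c eps i (0,0)), (Om_dec n1 n2 c eps j (0,0)).
      rewrite !mult_IZR. simpl. ring. }
  eapply meas_le_mono; [ | | apply (union_Z _ (fun i xi => exists j, (Z.abs j <= Z.of_nat J)%Z /\ B i j xi) J ((2 * INR J + 1) * S0))].
  - intros xi Hxi. exact Hxi.
  - exact U4.
  - intros xi [Hb [i [j [Hi [Hj [Hne Ho]]]]]].
    destruct (Z.lt_trichotomy (Z.abs j) (Z.abs i)) as [Hlt|[Heq|Hgt]].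
    + destruct (res_diff n1 n2 c eps M gamma kt k1 k2 J i j xi H Hb Hlt Ho) as [HiJ HjJ].
      exists i. split; [apply zabs_le_J; auto|]. exists j. split; [apply zabs_le_J; auto|].
      split; auto.
      assert (gamma * (zabs i - zabs j) * (zabs i + zabs j) * kt <= dl gamma kt J); [|lra].
      replace (gamma * (zabs i - zabs j) * (zabs i + zabs j) * kt) with (gamma * ((zabs i - zabs j) * (zabs i + zabs j)) * kt) by ring.
      assert (Hab : zabs j + 1 <= zabs i) by (unfold zabs; rewrite <- plus_IZR; apply IZR_le; lia).
      pose proof (zabs_nonneg j).
      apply le_dl; try lra. split; [nra|].
      assert (zabs i ^ 2 <= (2 * INR J + 1) ^ 2) by (apply sq_le_J; lra). simpl in *. nra.
    + exfalso. apply Hne. unfold zabs. rewrite Heq. reflexivity.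
    + exfalso. assert (Hab : zabs i + 1 <= zabs j) by (unfold zabs; rewrite <- plus_IZR; apply IZR_le; lia).
      pose proof (zabs_nonneg i). pose proof (Rabs_pos (kdot n1 n2 c eps k1 k2 xi + Omega n1 n2 c eps i xi - Omega n1 n2 c eps j xi)).
      assert (gamma * (zabs i - zabs j) * (zabs i + zabs j) * kt <= 0); [|lra].
      replace (gamma * (zabs i - zabs j) * (zabs i + zabs j) * kt) with (- ((gamma * kt) * ((zabs j - zabs i) * (zabs i + zabs j)))) by ring.
      assert (0 <= (gamma * kt) * ((zabs j - zabs i) * (zabs i + zabs j))); [|lra].
      apply Rmult_le_pos; [apply Rmult_le_pos; lra|apply Rmult_le_pos; lra].
  - intros i. apply union_Z with (B := fun j xi => B i j xi).
    + intros xi [j [Hj Hor]]. exists j. auto.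
    + intros j. apply HB.
    + lra.
  - nra.
Qed.

Lemma T5 n1 n2 c eps M gamma kt k1 k2 J :
  Hyp n1 n2 c eps M gamma kt k1 k2 J ->
  meas_le (fun xi => boxM M xi /\ exists j, inZ1 n1 n2 j /\ inZ1 n1 n2 (- j)%Z /\
     Rabs (kdot n1 n2 c eps k1 k2 xi + Omega n1 n2 c eps j xi - Omega n1 n2 c eps (- j)%Z xi)
        < gamma * zabs j * kt)
    (UU M gamma kt J).
Proof.
  intros H. gethyp H.
  destruct (UU_ge M gamma kt J HM Hg (proj1 Hkt)) as [HS HJ].
  destruct (UU_bounds M gamma kt J HM Hg (proj1 Hkt)) as (U1 & U2 & U3 & U4 & U5).
  set (S0 := 4 * M * dl gamma kt J * sP) in *.
  set (B := fun j xi => boxM M xi /\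
     Rabs (kdot n1 n2 c eps k1 k2 xi + Omega n1 n2 c eps j xi - Omega n1 n2 c eps (- j)%Z xi) < dl gamma kt J).
  assert (HB : forall j, meas_le (B j) S0).
  { intros j. unfold S0.
    apply (strip_lin _ M _ (fun xi => kdot n1 n2 c eps k1 k2 xi + Omega n1 n2 c eps j xi - Omega n1 n2 c eps (- j)%Z xi)
              (-4 * k1) (4 * k2)); auto.
    + apply dl_pos; lra.
    + lia.
    + intros xi. rewrite (w_lin n1 n2 c eps k1 k2 xi Hd), (Om_dec n1 n2 c eps j xi), (Om_dec n1 n2 c eps (-j) xi).
      rewrite (w_lin n1 n2 c eps k1 k2 (0,0) Hd), (Om_dec n1 n2 c eps j (0,0)), (Om_dec n1 n2 c eps (-j) (0,0)).
      rewrite !mult_IZR. simpl. ring. }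
  eapply meas_le_mono; [ | | apply (union_Z _ B J S0)].
  - intros xi Hxi. exact Hxi.
  - exact U2.
  - intros xi [Hb [j [Hj [Hj' Ho]]]].
    assert (HjJ := res_anti n1 n2 c eps M gamma kt k1 k2 J j xi H Hb Ho).
    exists j. split; [apply zabs_le_J; auto|]. split; auto.
    assert (gamma * zabs j * kt <= dl gamma kt J); [|lra].
    apply le_dl; try lra. split; [apply zabs_nonneg|].
    pose proof (pos_INR J). assert (2 * INR J + 1 <= (2 * INR J + 1) ^ 2) by (simpl; nra). lra.
  - exact HB.
  - lra.
Qed.

Definition conjk (n1 n2 : Z) (c eps gamma tau : R) (k1 k2 : Z) (xi : pt) : Prop :=
    let w := kdot n1 n2 c eps k1 k2 xi in
    let kt := Rpower (knorm k1 k2) (- tau) in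
    let Om := fun j => Omega n1 n2 c eps j xi in
    Rabs w >= gamma * kt /\
    (forall j, inZ1 n1 n2 j ->
       Rabs (w + Om j) >= gamma * (zabs j) ^ 2 * kt /\
       Rabs (w - Om j) >= gamma * (zabs j) ^ 2 * kt) /\
    (forall i j, inZ1 n1 n2 i -> inZ1 n1 n2 j ->
       Rabs (w + (Om i + Om j)) >= gamma * (zabs i + zabs j) ^ 2 * kt /\
       Rabs (w - (Om i + Om j)) >= gamma * (zabs i + zabs j) ^ 2 * kt) /\
    (forall i j, inZ1 n1 n2 i -> inZ1 n1 n2 j -> zabs i <> zabs j ->
       Rabs (w + Om i - Om j)
         >= gamma * (zabs i - zabs j) * (zabs i + zabs j) * kt) /\
    (forall j, inZ1 n1 n2 j -> inZ1 n1 n2 (- j)%Z ->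
       Rabs (w + Om j - Om (- j)%Z) >= gamma * zabs j * kt).

Lemma O0_iff n1 n2 c eps O gamma tau xi :
  O0 n1 n2 c eps O gamma tau xi <->
  O xi /\ forall k1 k2, (k1 <> 0%Z \/ k2 <> 0%Z) -> conjk n1 n2 c eps gamma tau k1 k2 xi.
Proof. unfold O0, conjk. reflexivity. Qed.

Lemma ge_of_not_lt a b : ~ a < b -> a >= b.
Proof. intros. lra. Qed.

Lemma Tk n1 n2 c eps M gamma tau k1 k2 J :
  Hyp n1 n2 c eps M gamma (Rpower (knorm k1 k2) (- tau)) k1 k2 J ->
  meas_le (fun xi => boxM M xi /\ ~ conjk n1 n2 c eps gamma tau k1 k2 xi)
     (INR 5 * UU M gamma (Rpower (knorm k1 k2) (- tau)) J).
Proof.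
  intros H. set (kt := Rpower (knorm k1 k2) (- tau)) in *.
  assert (HU : 0 <= UU M gamma kt J).
  { gethyp H. destruct (UU_bounds M gamma kt J HM Hg (proj1 Hkt)) as (U1 & _).
    destruct (UU_ge M gamma kt J HM Hg (proj1 Hkt)) as [HS _]. lra. }
  set (w := kdot n1 n2 c eps k1 k2).
  set (Om := fun j => Omega n1 n2 c eps j).
  apply (meas_le_finite _ (fun n => match n with
     | 0%nat => fun xi => boxM M xi /\ Rabs (kdot n1 n2 c eps k1 k2 xi) < gamma * kt
     | 1%nat => fun xi => boxM M xi /\ exists j, inZ1 n1 n2 j /\
     (Rabs (kdot n1 n2 c eps k1 k2 xi + Omega n1 n2 c eps j xi) < gamma * zabs j ^ 2 * kt \/
      Rabs (kdot n1 n2 c eps k1 k2 xi - Omega n1 n2 c eps j xi) < gamma * zabs j ^ 2 * kt)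
     | 2%nat => fun xi => boxM M xi /\ exists i j, inZ1 n1 n2 i /\ inZ1 n1 n2 j /\
     (Rabs (kdot n1 n2 c eps k1 k2 xi + (Omega n1 n2 c eps i xi + Omega n1 n2 c eps j xi))
        < gamma * (zabs i + zabs j) ^ 2 * kt \/
      Rabs (kdot n1 n2 c eps k1 k2 xi - (Omega n1 n2 c eps i xi + Omega n1 n2 c eps j xi))
        < gamma * (zabs i + zabs j) ^ 2 * kt)
     | 3%nat => fun xi => boxM M xi /\ exists i j, inZ1 n1 n2 i /\ inZ1 n1 n2 j /\ zabs i <> zabs j /\
     Rabs (kdot n1 n2 c eps k1 k2 xi + Omega n1 n2 c eps i xi - Omega n1 n2 c eps j xi)
        < gamma * (zabs i - zabs j) * (zabs i + zabs j) * kt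
     | _ => fun xi => boxM M xi /\ exists j, inZ1 n1 n2 j /\ inZ1 n1 n2 (- j)%Z /\
     Rabs (kdot n1 n2 c eps k1 k2 xi + Omega n1 n2 c eps j xi - Omega n1 n2 c eps (- j)%Z xi)
        < gamma * zabs j * kt end) _ 4).
  - intros xi [Hb Hn]. apply Classical_Prop.NNPP. intro Hc. apply Hn. unfold conjk. cbv zeta.
    fold kt.
    repeat split.
    + intros; apply ge_of_not_lt. intro. apply Hc. exists 0%nat. split; [lia|]. split; auto.
    + intros; apply ge_of_not_lt. intro. apply Hc. exists 1%nat. split; [lia|]. split; auto. exists j. auto.
    + intros; apply ge_of_not_lt. intro. apply Hc. exists 1%nat. split; [lia|]. split; auto. exists j. auto.
    + intros; apply ge_of_not_lt. intro. apply Hc. exists 2%nat. split; [lia|]. split; auto. exists i, j. auto.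
    + intros; apply ge_of_not_lt. intro. apply Hc. exists 2%nat. split; [lia|]. split; auto. exists i, j. auto.
    + intros; apply ge_of_not_lt. intro. apply Hc. exists 3%nat. split; [lia|]. split; auto. exists i, j. auto.
    + intros; apply ge_of_not_lt. intro. apply Hc. exists 4%nat. split; [lia|]. split; auto. exists j. auto.
  - intros n Hn. destruct n as [|[|[|[|[|n]]]]].
    + apply T1; auto.
    + apply T2; auto.
    + apply T3; auto.
    + apply T4; auto.
    + apply T5; auto.
    + lia.
  - exact HU.
Qed.

Lemma final_bound (m D M s g kt : R) : 1 <= m -> 1 <= D -> 0 < M -> 0 < s -> 0 < g -> 0 < kt -> kt <= / m ^ 8 ->
  (2 * m + 1) * (2 * (5 * (2 * (2 * (D * m) + 1) ^ 2 * (4 * M * (g * (2 * (D * m) + 1) ^ 2 * kt) * s))))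
  <= 19440 * M * s * D ^ 4 * g * (2 * / (m * (m + 1))).
Proof.
  intros Hm HD HM Hs Hg Hk Hk8.
  set (y := 2 * (D * m) + 1).
  assert (Hy0 : 0 <= y) by (unfold y; nra).
  assert (Hy : y <= 3 * D * m) by (unfold y; nra).
  assert (Hy4 : y ^ 4 <= (3 * D * m) ^ 4) by (apply pow_incr; lra).
  assert (H1 : (2 * m + 1) * y ^ 4 <= (3 * m) * (3 * D * m) ^ 4).
  { apply Rmult_le_compat; try lra. apply pow_le; lra. }
  assert (H2 : (2 * m + 1) * y ^ 4 * kt <= (3 * m) * (3 * D * m) ^ 4 * / m ^ 8).
  { apply Rmult_le_compat; try lra. apply Rmult_le_pos; [lra|apply pow_le; lra]. }
  assert (Hm8 : 0 < m ^ 8) by (apply pow_lt; lra).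
  assert (H3 : (3 * m) * (3 * D * m) ^ 4 * / m ^ 8 = 243 * D ^ 4 * / m ^ 3) by (field; lra).
  assert (H4 : / m ^ 3 <= 2 * / (m * (m + 1))).
  { assert (0 < m * (m + 1)) by nra. assert (0 < m ^ 3) by (apply pow_lt; lra).
    apply Rmult_le_reg_r with (m ^ 3 * (m * (m + 1))); [nra|].
    replace (/ m ^ 3 * (m ^ 3 * (m * (m + 1)))) with (m * (m + 1)) by (field; lra).
    replace (2 * / (m * (m + 1)) * (m ^ 3 * (m * (m + 1)))) with (2 * m ^ 3) by (field; lra).
    simpl. nra. }
  assert (HD4 : 0 <= D ^ 4) by (apply pow_le; lra).
  assert (H5 : (2 * m + 1) * y ^ 4 * kt <= 243 * D ^ 4 * (2 * / (m * (m + 1)))).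
  { rewrite H3 in H2. assert (243 * D ^ 4 * / m ^ 3 <= 243 * D ^ 4 * (2 * / (m * (m + 1)))).
    { apply Rmult_le_compat_l; nra. } lra. }
  replace ((2 * m + 1) * (2 * (5 * (2 * y ^ 2 * (4 * M * (g * y ^ 2 * kt) * s)))))
    with (80 * (M * s * g) * ((2 * m + 1) * y ^ 4 * kt)) by ring.
  replace (19440 * M * s * D ^ 4 * g * (2 * / (m * (m + 1))))
    with (80 * (M * s * g) * (243 * D ^ 4 * (2 * / (m * (m + 1))))) by ring.
  apply Rmult_le_compat_l; [|exact H5].
  assert (0 < M * s * g) by (apply Rmult_lt_0_compat; [apply Rmult_lt_0_compat|]; lra). lra.
Qed.

Definition gq (m : nat) : R := match m with 0%nat => 0 | _ => / (INR m * (INR m + 1)) end.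

Lemma gq_sum N : sum_f_R0 gq N = 1 - / (INR N + 1).
Proof.
  induction N.
  - simpl. field.
  - rewrite tech5, IHN. unfold gq. rewrite S_INR. pose proof (pos_INR N).
    field. split; lra.
Qed.

Lemma kt_facts (m : nat) tau : (1 <= m)%nat -> tau >= 8 ->
  0 < Rpower (INR m) (- tau) /\ Rpower (INR m) (- tau) <= / INR m ^ 8 /\ Rpower (INR m) (- tau) <= 1.
Proof.
  intros Hm Ht. assert (H1 : 1 <= INR m) by (apply (le_INR 1); lia).
  split; [unfold Rpower; apply exp_pos|].
  assert (Rpower (INR m) (- tau) <= Rpower (INR m) (- INR 8)).
  { apply Rle_Rpower; auto. simpl. lra. }
  rewrite (Rpower_Ropp (INR m) (INR 8)), Rpower_pow in H by lra.
  split; auto.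
  assert (1 <= INR m ^ 8) by (apply pow_R1_Rle; lra).
  assert (/ INR m ^ 8 <= 1). { rewrite <- Rinv_1. apply Rinv_le_contravar; lra. }
  lra.
Qed.

Lemma Bm_bound n1 n2 c eps M gamma tau (D1 m : nat) :
  (0 < n1)%Z -> Z.odd n1 = true -> (n2 - n1 = 4)%Z -> c > 0 -> eps > 0 ->
  2 * (c / sP) < / eps ^ 4 -> 0 < M -> 0 < gamma -> gamma <= / eps ^ 4 / 8 -> gamma <= c / sP ->
  tau >= 8 -> 1 <= INR D1 ->
  4 * (2 * Pc n1 n2 M + Wc n1 n2 c eps M) <= / eps ^ 4 * INR D1 ->
  Wc n1 n2 c eps M <= c / sP * INR D1 ->
  meas_le (fun xi => boxM M xi /\ exists k1 k2, (Z.abs k1 + Z.abs k2 = Z.of_nat m)%Z /\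
       (k1 <> 0%Z \/ k2 <> 0%Z) /\ ~ conjk n1 n2 c eps gamma tau k1 k2 xi)
    (19440 * M * sP * INR D1 ^ 4 * gamma * (2 * gq m)).
Proof.
  intros Hn1 Hodd Hd Hc He Hce HM Hg Hg1 Hg2 Ht HD1 HD2 HD3.
  destruct m as [|m'].
  - apply meas_le_empty.
    + intros xi [_ [k1 [k2 [Hk [Hnz _]]]]]. lia.
    + simpl. lra.
  - set (m := S m') in *.
    assert (Hm1 : (1 <= m)%nat) by (unfold m; lia).
    destruct (kt_facts m tau Hm1 Ht) as (Hk0 & Hk8 & Hk1).
    set (kt := Rpower (INR m) (- tau)) in *.
    set (X := INR 5 * UU M gamma kt (D1 * m)).
    assert (HmR : 1 <= INR m) by (apply (le_INR 1); lia).
    assert (HX : forall k1 k2, meas_le (fun xi => boxM M xi /\ (Z.abs k1 + Z.abs k2 = Z.of_nat m)%Z /\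
                 ~ conjk n1 n2 c eps gamma tau k1 k2 xi) X).
    { intros k1 k2. destruct (Z.eq_dec (Z.abs k1 + Z.abs k2) (Z.of_nat m)) as [Heq|Hne].
      - assert (Hkn : knorm k1 k2 = INR m) by (unfold knorm; rewrite Heq, <- INR_IZR_INZ; reflexivity).
        assert (HH : Hyp n1 n2 c eps M gamma (Rpower (knorm k1 k2) (- tau)) k1 k2 (D1 * m)).
        { rewrite Hkn. fold kt. unfold Hyp. rewrite Hkn, mult_INR.
          repeat split; auto; try lra.
          - unfold m in Heq. lia.
          - replace (/ eps ^ 4 * (INR D1 * INR m)) with ((/ eps ^ 4 * INR D1) * INR m) by ring.
            apply Rmult_le_compat_r; lra.
          - replace (c / sP * (INR D1 * INR m)) with ((c / sP * INR D1) * INR m) by ring.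
            apply Rmult_le_compat_r; lra. }
        pose proof (Tk n1 n2 c eps M gamma tau k1 k2 (D1 * m) HH) as HT.
        rewrite Hkn in HT. fold kt in HT.
        eapply meas_le_mono; [|apply Rle_refl|exact HT]. intros xi (? & ? & ?). auto.
      - apply meas_le_empty.
        + intros xi (_ & ? & _). auto.
        + unfold X. destruct (UU_ge M gamma kt (D1 * m) HM Hg Hk0) as [HS HJ].
          unfold UU. assert (0 <= (2 * INR (D1 * m) + 1) ^ 2) by apply pow2_ge_0.
          simpl INR. apply Rmult_le_pos; [lra|]. apply Rmult_le_pos; [|lra]. lra. }
    assert (HX0 : 0 <= X).
    { unfold X. destruct (UU_ge M gamma kt (D1 * m) HM Hg Hk0) as [HS HJ].
      unfold UU. assert (0 <= (2 * INR (D1 * m) + 1) ^ 2) by apply pow2_ge_0.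
      simpl INR. apply Rmult_le_pos; [lra|]. apply Rmult_le_pos; [|lra]. lra. }
    eapply meas_le_mono; [ | | apply (union_Z _ (fun k1 xi => exists k2, boxM M xi /\ (Z.abs k1 + Z.abs k2 = Z.of_nat m)%Z /\
                 ~ conjk n1 n2 c eps gamma tau k1 k2 xi) m (INR 2 * X))].
    + intros xi Hxi. exact Hxi.
    + unfold X, UU, dl. rewrite mult_INR.
      replace (INR 2) with 2 by (simpl; ring). replace (INR 5) with 5 by (simpl; ring).
      unfold gq. fold m. replace (match m with | 0%nat => 0 | S _ => / (INR m * (INR m + 1)) end)
         with (/ (INR m * (INR m + 1))) by reflexivity.
      apply final_bound; auto. apply sP_pos.
    + intros xi [Hb [k1 [k2 [Heq [_ Hn]]]]]. exists k1. split; [lia|]. exists k2. auto.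
    + intros k1. apply (meas_le_mono _ (fun xi => exists n, (n <= 1)%nat /\
          (boxM M xi /\ (Z.abs k1 + Z.abs (if Nat.eq_dec n 0 then Z.of_nat m - Z.abs k1 else - (Z.of_nat m - Z.abs k1)) = Z.of_nat m)%Z /\
           ~ conjk n1 n2 c eps gamma tau k1 (if Nat.eq_dec n 0 then Z.of_nat m - Z.abs k1 else - (Z.of_nat m - Z.abs k1))%Z xi)) (INR (S 1) * X) (INR 2 * X)).
      * intros xi [k2 (Hb & Heq & Hn)].
        destruct (Z.le_gt_cases 0 k2).
        -- exists 0%nat. split; [lia|]. destruct (Nat.eq_dec 0 0) as [_|Hne]; [|lia]. replace (Z.of_nat m - Z.abs k1)%Z with k2 by lia. auto.
        -- exists 1%nat. split; [lia|]. destruct (Nat.eq_dec 1 0) as [Hne|_]; [lia|]. replace (- (Z.of_nat m - Z.abs k1))%Z with k2 by lia. auto.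
      * right. reflexivity.
      * apply (meas_le_finite _ (fun n xi => boxM M xi /\ (Z.abs k1 + Z.abs (if Nat.eq_dec n 0 then Z.of_nat m - Z.abs k1 else - (Z.of_nat m - Z.abs k1)) = Z.of_nat m)%Z /\
           ~ conjk n1 n2 c eps gamma tau k1 (if Nat.eq_dec n 0 then Z.of_nat m - Z.abs k1 else - (Z.of_nat m - Z.abs k1))%Z xi)); auto.
    + apply Rmult_le_pos; [simpl; lra|exact HX0].
Qed.

Theorem proposition4p2
  (n1 n2 : Z) (c eps : R) (Oset : pt -> Prop)
  (Hn1pos : (0 < n1)%Z) (Hn12 : (n1 < n2)%Z) (Hodd : Z.odd n1 = true)
  (Hdiff : (n2 - n1 = 4)%Z)
  (Hc : c > 0) (Heps : eps > 0) (Hepsc : / (eps ^ 4) > c / (2 * PI))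
  (Hpos : forall xi, Oset xi -> fst xi > 0 /\ snd xi > 0)
  (Hbdd : exists M, forall xi, Oset xi -> Rabs (fst xi) <= M /\ Rabs (snd xi) <= M) :
  exists tau0 : R, forall tau : R, tau >= tau0 ->
    exists gamma0 C : R, gamma0 > 0 /\ C > 0 /\
      forall gamma : R, 0 < gamma <= gamma0 ->
        meas_le (fun xi => Oset xi /\ ~ O0 n1 n2 c eps Oset gamma tau xi) (C * gamma).
Proof.
  destruct Hbdd as [M0 HM0].
  set (M := Rabs M0 + 1).
  assert (HM : 0 < M) by (unfold M; pose proof (Rabs_pos M0); lra).
  assert (Hbox : forall xi, Oset xi -> boxM M xi).
  { intros xi Hx. destruct (HM0 xi Hx). pose proof (Rle_abs M0). unfold boxM, M. lra. }
  pose proof sP_pos as HsP. pose proof PI_RGT_0.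
  assert (HE : 0 < / eps ^ 4) by (apply Rinv_0_lt_compat, pow_lt; lra).
  assert (Hcs : 0 < c / sP) by (apply Rdiv_lt_0_compat; lra).
  assert (Hce : 2 * (c / sP) < / eps ^ 4).
  { replace (2 * (c / sP)) with (c / (2 * PI)) by (unfold sP; field; lra). lra. }
  destruct (PW_nonneg n1 n2 c eps M Hn1pos Hdiff Hc Heps HM) as [HP HW].
  destruct (nat_above (4 * (2 * Pc n1 n2 M + Wc n1 n2 c eps M) / / eps ^ 4 + Wc n1 n2 c eps M / (c / sP))) as [D0 HD0].
  set (D1 := S D0).
  assert (HD1 : 1 <= INR D1) by (unfold D1; rewrite S_INR; pose proof (pos_INR D0); lra).
  assert (HD1' : INR D0 <= INR D1) by (unfold D1; rewrite S_INR; lra).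
  assert (Ha : 0 <= 4 * (2 * Pc n1 n2 M + Wc n1 n2 c eps M) / / eps ^ 4).
  { apply Rmult_le_pos; [lra|]. left. apply Rinv_0_lt_compat. lra. }
  assert (Hb : 0 <= Wc n1 n2 c eps M / (c / sP)).
  { apply Rmult_le_pos; [lra|]. left. apply Rinv_0_lt_compat. lra. }
  assert (HD2 : 4 * (2 * Pc n1 n2 M + Wc n1 n2 c eps M) <= / eps ^ 4 * INR D1).
  { assert (4 * (2 * Pc n1 n2 M + Wc n1 n2 c eps M) / / eps ^ 4 <= INR D1) by lra.
    apply Rmult_le_compat_l with (r := / eps ^ 4) in H0; [|lra].
    replace (/ eps ^ 4 * (4 * (2 * Pc n1 n2 M + Wc n1 n2 c eps M) / / eps ^ 4))
      with (4 * (2 * Pc n1 n2 M + Wc n1 n2 c eps M)) in H0 by (field; lra). exact H0. }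
  assert (HD3 : Wc n1 n2 c eps M <= c / sP * INR D1).
  { assert (Wc n1 n2 c eps M / (c / sP) <= INR D1) by lra.
    apply Rmult_le_compat_l with (r := c / sP) in H0; [|lra].
    replace (c / sP * (Wc n1 n2 c eps M / (c / sP))) with (Wc n1 n2 c eps M) in H0 by (field; lra).
    exact H0. }
  set (K1 := 19440 * M * sP * INR D1 ^ 4).
  assert (HK1 : 0 < K1).
  { unfold K1. assert (0 < INR D1 ^ 4) by (apply pow_lt; lra).
    apply Rmult_lt_0_compat; [apply Rmult_lt_0_compat; [apply Rmult_lt_0_compat|]|]; lra. }
  exists 8. intros tau Htau.
  exists (Rmin (/ eps ^ 4 / 8) (c / sP)), (2 * K1).
  split; [apply Rmin_pos; lra|]. split; [lra|].
  intros gamma [Hg Hg0].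
  assert (Hg1 : gamma <= / eps ^ 4 / 8) by (pose proof (Rmin_l (/ eps ^ 4 / 8) (c / sP)); lra).
  assert (Hg2 : gamma <= c / sP) by (pose proof (Rmin_r (/ eps ^ 4 / 8) (c / sP)); lra).
  apply (meas_le_union _ (fun m xi => boxM M xi /\ exists k1 k2, (Z.abs k1 + Z.abs k2 = Z.of_nat m)%Z /\
       (k1 <> 0%Z \/ k2 <> 0%Z) /\ ~ conjk n1 n2 c eps gamma tau k1 k2 xi)
       (fun m => 19440 * M * sP * INR D1 ^ 4 * gamma * (2 * gq m))).
  - intros xi [Hx Hn]. rewrite O0_iff in Hn.
    assert (Hn' : ~ forall k1 k2, (k1 <> 0%Z \/ k2 <> 0%Z) -> conjk n1 n2 c eps gamma tau k1 k2 xi) by tauto.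
    apply not_all_ex_not in Hn'. destruct Hn' as [k1 Hn'].
    apply not_all_ex_not in Hn'. destruct Hn' as [k2 Hn'].
    apply imply_to_and in Hn'. destruct Hn' as [Hk Hcj].
    exists (Z.to_nat (Z.abs k1 + Z.abs k2)). split; [apply Hbox; auto|].
    exists k1, k2. split; [lia|]. auto.
  - intros m. apply Bm_bound; auto.
  - intros N.
    replace (sum_f_R0 (fun m => 19440 * M * sP * INR D1 ^ 4 * gamma * (2 * gq m)) N)
      with (sum_f_R0 gq N * (2 * K1 * gamma)).
    + rewrite gq_sum. pose proof (pos_INR N).
      assert (0 < / (INR N + 1)) by (apply Rinv_0_lt_compat; lra).
      assert (0 < 2 * K1 * gamma) by (apply Rmult_lt_0_compat; lra).
      nra.
    + rewrite Rmult_comm, scal_sum. apply sum_eq. intros i _. unfold K1. ring.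
Qed.
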